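(* Let $f:\mathbb{R}^n\to\mathbb{R}\cup\{\infty\}$ be a proper lower semicontinuous function with $\bar x\in\operatorname{dom} f$ and $0\in\partial f(\bar x)$. Suppose $f$ is subdifferentially continuous, prox-regular, and twice epi-differentiable at $\bar x$ for $0$. Then the following are equivalent: (i) $\bar x$ is a strong local minimizer of $f$; (ii) $\bar x$ is a local minimizer of $f$ and $\partial f$ is strongly metrically subregular at $\bar x$ for $0$; (iii) $\langle z,w\rangle>0$ for all $w\in\operatorname{dom}D(\partial f)(\bar x|0)\setminus\{0\}$ and all $z\in D(\partial f)(\bar x|0)(w)$; (iv) there exists $c>0$ such that $\langle z,w\rangle\ge c\|w\|^2$ for all $w\in\operatorname{dom}D(\partial f)(\bar x|0)$ and all $z\in D(\partial f)(\bar x|0)(w)$. Moreover, if one of (i)–(iv) holds, then $$\mathrm{QG}(f;\bar x)=\inf\Big\{\frac{\langle z,w\rangle}{\|w\|^2}\ \Big|\ z\in D(\partial f)(\bar x|0)(w)\Big\}$$ with the convention $0/0=\infty$.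
   Context: Limiting subdifferential $\partial f(\bar x)=\{v\mid (v,-1)\in N_{\operatorname{epi} f}(\bar x,f(\bar x))\}$. Tangent cone $T_\Omega(\bar u)=\{v\mid \exists t_k\downarrow0,\ v_k\to v,\ \bar u+t_kv_k\in\Omega\}$; $D(\partial f)(\bar x|\bar v)(w)=\{z\mid (w,z)\in T_{\operatorname{gph}\partial f}(\bar x,\bar v)\}$. $f$ is prox-regular at $\bar x$ for $\bar v\in\partial f(\bar x)$ if there are $r,\varepsilon>0$ such that $f(x)\ge f(u)+\langle v,x-u\rangle-\frac r2\|x-u\|^2$ whenever $\|x-\bar x\|\le\varepsilon$, $\|u-\bar x\|\le\varepsilon$, $|f(u)-f(\bar x)|<\varepsilon$, $v\in\partial f(u)$, $\|v-\bar v\|\le\varepsilon$. $f$ is subdifferentially continuous at $\bar x$ for $\bar v$ if $(x_k,v_k)\to(\bar x,\bar v)$ with $v_k\in\partial f(x_k)$ implies $f(x_k)\to f(\bar x)$. The second subderivative is $d^2f(\bar x|v)(w)=\liminf_{\tau\downarrow0,\,w'\to w}\frac{f(\bar x+\tau w')-f(\bar x)-\tau\langle v,w'\rangle}{\tau^2/2}$; $f$ is twice epi-differentiable at $\bar x$ for $v$ if for every $w$ and every $\tau_k\downarrow0$ there exist $w^k\to w$ with $\frac{f(\bar x+\tau_kw^k)-f(\bar x)-\tau_k\langle v,w^k\rangle}{\tau_k^2/2}\to d^2f(\bar x|v)(w)$. Strong metric subregularity of $F$ at $\bar x$ for $\bar y$: there are $\kappa>0$ and a neighborhood $U$ of $\bar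 x$ with $d(x;F^{-1}(\bar y))\le\kappa\,d(\bar y;F(x))$ on $U$ and $\bar x$ is isolated in $F^{-1}(\bar y)$. Strong local minimizer with modulus $\kappa$: $f(x)-f(\bar x)\ge\frac\kappa2\|x-\bar x\|^2$ near $\bar x$; $\mathrm{QG}(f;\bar x)$ is the supremum of such $\kappa$. *)

(* Defs.v *)
From Stdlib Require Import Reals Lra.
From Stdlib Require Fin.
Open Scope R_scope.

Definition vec (n : nat) := Fin.t n -> R.

Definition vzero {n} : vec n := fun _ => 0.
Definition vadd {n} (x y : vec n) : vec n := fun i => x i + y i.
Definition vsub {n} (x y : vec n) : vec n := fun i => x i - y i.
Definition vscal {n} (a : R) (x : vec n) : vec n := fun i => a * x i.

Fixpoint dot (n : nat) : vec n -> vec n -> R :=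
  match n return vec n -> vec n -> R with
  | O => fun _ _ => 0
  | S m => fun x y => x Fin.F1 * y Fin.F1 +
             dot m (fun i => x (Fin.FS i)) (fun i => y (Fin.FS i))
  end.
Arguments dot {n} x y.

Definition norm {n} (x : vec n) : R := sqrt (dot x x).

Fixpoint splitat (n m : nat) : Fin.t (n + m) -> Fin.t n + Fin.t m :=
  match n return Fin.t (n + m) -> Fin.t n + Fin.t m with
  | O => fun i => inr i
  | S k => fun i => Fin.caseS' i (fun _ => (Fin.t (S k) + Fin.t m)%type)
             (inl Fin.F1)
             (fun j => match splitat k m j with
                       | inl a => inl (Fin.FS a) | inr b => inr b end)
  end.

(** Pairing: R^n x R^m identified with R^(n+m). *)
Definition pairv {n m} (x : vec n) (y : vec m) : vec (n + m) :=
  fun i => match splitat n m i with inl j => x j | inr j => y j end.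

Definition rv (t : R) : vec 1 := fun _ => t.

Definition vconv {n} (u : nat -> vec n) (l : vec n) : Prop :=
  forall eps, eps > 0 -> exists N, forall k, (k >= N)%nat -> norm (vsub (u k) l) < eps.

Definition down_to_0 (t : nat -> R) : Prop :=
  (forall k, t k > 0) /\ Un_cv t 0.

Inductive xreal := MInf | Fin (r : R) | PInf.

Definition xle (a b : xreal) : Prop :=
  match a, b with
  | MInf, _ => True
  | _, PInf => True
  | Fin x, Fin y => x <= y
  | _, _ => False
  end.
Definition xlt (a b : xreal) : Prop := xle a b /\ a <> b.

Definition is_lb (S : xreal -> Prop) (a : xreal) := forall s, S s -> xle a s.
Definition is_ub (S : xreal -> Prop) (a : xreal) := forall s, S s -> xle s a.
Definition is_inf (S : xreal -> Prop) (a : xreal) :=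
  is_lb S a /\ forall b, is_lb S b -> xle b a.
Definition is_sup (S : xreal -> Prop) (a : xreal) :=
  is_ub S a /\ forall b, is_ub S b -> xle a b.

Definition xconv (q : nat -> xreal) (a : xreal) : Prop :=
  match a with
  | Fin l => forall eps, eps > 0 -> exists N, forall k, (k >= N)%nat ->
               exists r, q k = Fin r /\ Rabs (r - l) < eps
  | PInf => forall M, exists N, forall k, (k >= N)%nat -> xlt (Fin M) (q k)
  | MInf => forall M, exists N, forall k, (k >= N)%nat -> xlt (q k) (Fin M)
  end.

Definition dom {n} (f : vec n -> xreal) (x : vec n) : Prop := exists r, f x = Fin r.

Definition proper {n} (f : vec n -> xreal) : Prop :=
  (forall x, f x <> MInf) /\ exists x, dom f x.

Definition lsc {n} (f : vec n -> xreal) : Prop :=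
  forall x (r : R), xlt (Fin r) (f x) ->
    exists d, d > 0 /\ forall y, norm (vsub y x) < d -> xlt (Fin r) (f y).

Definition regular_normal {m} (Om : vec m -> Prop) (u v : vec m) : Prop :=
  Om u /\ forall eps, eps > 0 -> exists d, d > 0 /\
    forall u', Om u' -> norm (vsub u' u) < d ->
      dot v (vsub u' u) <= eps * norm (vsub u' u).

Definition normal_cone {m} (Om : vec m -> Prop) (u v : vec m) : Prop :=
  Om u /\ exists (uk vk : nat -> vec m),
    (forall k, Om (uk k)) /\ vconv uk u /\ vconv vk v /\
    (forall k, regular_normal Om (uk k) (vk k)).

Definition tangent_cone {m} (Om : vec m -> Prop) (u v : vec m) : Prop :=
  exists (t : nat -> R) (vk : nat -> vec m),
    down_to_0 t /\ vconv vk v /\ forall k, Om (vadd u (vscal (t k) (vk k))).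

Definition epi {n} (f : vec n -> xreal) : vec (n + 1) -> Prop :=
  fun p => exists x t, p = pairv x (rv t) /\ xle (f x) (Fin t).

Definition subdiff {n} (f : vec n -> xreal) (x v : vec n) : Prop :=
  exists fx, f x = Fin fx /\
    normal_cone (epi f) (pairv x (rv fx)) (pairv v (rv (-1))).

Definition gph_subdiff {n} (f : vec n -> xreal) : vec (n + n) -> Prop :=
  fun p => exists x v, p = pairv x v /\ subdiff f x v.

(** graphical derivative: z in D(subdiff f)(x|v)(w) *)
Definition gder {n} (f : vec n -> xreal) (x v w z : vec n) : Prop :=
  tangent_cone (gph_subdiff f) (pairv x v) (pairv w z).

Definition gder_dom {n} (f : vec n -> xreal) (x v w : vec n) : Prop :=
  exists z, gder f x v w z.

Definition prox_regular {n} (f : vec n -> xreal) (xb vb : vec n) : Prop :=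
  exists fxb, f xb = Fin fxb /\
  exists r eps, r > 0 /\ eps > 0 /\
    forall x u v fu,
      norm (vsub x xb) <= eps -> norm (vsub u xb) <= eps ->
      f u = Fin fu -> Rabs (fu - fxb) < eps ->
      subdiff f u v -> norm (vsub v vb) <= eps ->
      xle (Fin (fu + dot v (vsub x u) - r / 2 * (norm (vsub x u)) ^ 2)) (f x).

Definition subdiff_continuous {n} (f : vec n -> xreal) (xb vb : vec n) : Prop :=
  exists fxb, f xb = Fin fxb /\
  forall (xk vk : nat -> vec n),
    vconv xk xb -> vconv vk vb -> (forall k, subdiff f (xk k) (vk k)) ->
    xconv (fun k => f (xk k)) (Fin fxb).

Definition quot2 {n} (f : vec n -> xreal) (xb v : vec n) (fxb tau : R) (w : vec n)
  : xreal :=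
  match f (vadd xb (vscal tau w)) with
  | Fin y => Fin ((y - fxb - tau * dot v w) / (tau ^ 2 / 2))
  | PInf => PInf
  | MInf => MInf
  end.

(** a = d^2 f(xb|v)(w) = liminf_{tau -> 0+, w' -> w} quot2, i.e.
    sup_{delta>0} inf { quot2 tau w' | 0<tau<delta, |w'-w|<delta } *)
Definition second_subderiv {n} (f : vec n -> xreal) (xb v w : vec n) (a : xreal)
  : Prop :=
  exists fxb, f xb = Fin fxb /\
  is_sup (fun b => exists d, d > 0 /\
            is_inf (fun q => exists tau w', 0 < tau < d /\
                      norm (vsub w' w) < d /\ q = quot2 f xb v fxb tau w') b) a.

Definition twice_epi_diff {n} (f : vec n -> xreal) (xb v : vec n) : Prop :=
  exists fxb, f xb = Fin fxb /\
  forall (w : vec n) (tau : nat -> R), down_to_0 tau ->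
    exists wk : nat -> vec n, vconv wk w /\
      forall a, second_subderiv f xb v w a ->
        xconv (fun k => quot2 f xb v fxb (tau k) (wk k)) a.

Definition local_min {n} (f : vec n -> xreal) (xb : vec n) : Prop :=
  exists d, d > 0 /\ forall x, norm (vsub x xb) < d -> xle (f xb) (f x).

Definition strong_min_mod {n} (f : vec n -> xreal) (xb : vec n) (kappa : R) : Prop :=
  exists fxb, f xb = Fin fxb /\
  exists d, d > 0 /\ forall x, norm (vsub x xb) < d ->
    xle (Fin (fxb + kappa / 2 * (norm (vsub x xb)) ^ 2)) (f x).

Definition strong_local_min {n} (f : vec n -> xreal) (xb : vec n) : Prop :=
  exists kappa, kappa > 0 /\ strong_min_mod f xb kappa.

Definition is_QG {n} (f : vec n -> xreal) (xb : vec n) (q : xreal) : Prop :=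
  is_sup (fun k => exists kappa, kappa > 0 /\ strong_min_mod f xb kappa /\ k = Fin kappa) q.

(** d = dist(x; A) = inf_{a in A} |x - a| (inf of empty set = +oo) *)
Definition is_dist {n} (x : vec n) (A : vec n -> Prop) (d : xreal) : Prop :=
  is_inf (fun s => exists a, A a /\ s = Fin (norm (vsub x a))) d.

Definition xscal (k : R) (a : xreal) : xreal :=
  match a with Fin r => Fin (k * r) | PInf => PInf | MInf => MInf end.

Definition strong_metric_subreg {n} (F : vec n -> vec n -> Prop) (xb yb : vec n) : Prop :=
  (exists kappa d, kappa > 0 /\ d > 0 /\
     forall x, norm (vsub x xb) < d ->
       forall d1 d2, is_dist x (fun u => F u yb) d1 -> is_dist yb (F x) d2 ->
         xle d1 (xscal kappa d2))
  /\ F xb yb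
  /\ exists d, d > 0 /\ forall x, norm (vsub x xb) < d -> F x yb -> x = xb.

Definition ratio {n} (z w : vec n) : xreal :=
  if Req_EM_T (norm w) 0 then PInf else Fin (dot z w / (norm w) ^ 2).

(* Main.v *)
Require Import Defs.
From Stdlib Require Import Reals Lra Lia FunctionalExtensionality Classical ClassicalEpsilon Rtopology.
From Stdlib Require Fin.
Open Scope R_scope.

Lemma dot_S m (x y : vec (S m)) :
  dot x y = x Fin.F1 * y Fin.F1 + dot (fun i => x (Fin.FS i)) (fun i => y (Fin.FS i)).
Proof. reflexivity. Qed.

Lemma dot_comm n (x y : vec n) : dot x y = dot y x.
Proof. induction n. reflexivity. rewrite !dot_S, IHn. ring. Qed.

Lemma dot_add_l n (x y z : vec n) : dot (vadd x y) z = dot x z + dot y z.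
Proof. induction n. simpl; ring. rewrite !dot_S.
  rewrite (IHn (fun i => x (Fin.FS i)) (fun i => y (Fin.FS i))). unfold vadd. ring. Qed.

Lemma dot_scal_l n a (x y : vec n) : dot (vscal a x) y = a * dot x y.
Proof. induction n. simpl; ring. rewrite !dot_S.
  rewrite (IHn (fun i => x (Fin.FS i))). unfold vscal. ring. Qed.

Lemma dot_sub_l n (x y z : vec n) : dot (vsub x y) z = dot x z - dot y z.
Proof. induction n. simpl; ring. rewrite !dot_S.
  rewrite (IHn (fun i => x (Fin.FS i)) (fun i => y (Fin.FS i))). unfold vsub. ring. Qed.

Lemma dot_zero_l n (y : vec n) : dot vzero y = 0.
Proof. induction n. reflexivity. rewrite dot_S. rewrite (IHn). unfold vzero. ring. Qed.

Lemma dot_add_r n (x y z : vec n) : dot z (vadd x y) = dot z x + dot z y.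
Proof. rewrite dot_comm, dot_add_l, (dot_comm _ z x), (dot_comm _ z y). ring. Qed.
Lemma dot_scal_r n a (x y : vec n) : dot y (vscal a x) = a * dot y x.
Proof. rewrite dot_comm, dot_scal_l, dot_comm. ring. Qed.
Lemma dot_sub_r n (x y z : vec n) : dot z (vsub x y) = dot z x - dot z y.
Proof. rewrite dot_comm, dot_sub_l, (dot_comm _ z x), (dot_comm _ z y). ring. Qed.
Lemma dot_zero_r n (y : vec n) : dot y vzero = 0.
Proof. rewrite dot_comm. apply dot_zero_l. Qed.

Lemma dot_pos n (x : vec n) : 0 <= dot x x.
Proof. induction n. simpl; lra. rewrite dot_S.
  specialize (IHn (fun i => x (Fin.FS i))). nra. Qed.

Lemma dot_eq0 n (x : vec n) : dot x x = 0 -> x = vzero.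
Proof. induction n; intros H; apply functional_extensionality; intro i.
  - inversion i.
  - rewrite dot_S in H. pose proof (dot_pos _ (fun i => x (Fin.FS i))).
    assert (x Fin.F1 = 0) by nra.
    assert ((fun i => x (Fin.FS i)) = vzero) as E by (apply IHn; nra).
    revert x H H0 H1 E. pattern i. apply Fin.caseS'.
    + intros. unfold vzero. auto.
    + intros p x _ _ _ E. change (x (Fin.FS p)) with ((fun i => x (Fin.FS i)) p). rewrite E. reflexivity.
Qed.

Lemma norm_ge0 n (x : vec n) : 0 <= norm x.
Proof. apply sqrt_pos. Qed.
Lemma norm_sq n (x : vec n) : norm x ^ 2 = dot x x.
Proof. unfold norm. rewrite <- Rsqr_pow2. apply Rsqr_sqrt, dot_pos. Qed.
Lemma norm_sq' n (x : vec n) : norm x * norm x = dot x x.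
Proof. unfold norm. apply sqrt_sqrt, dot_pos. Qed.
Lemma norm_eq0 n (x : vec n) : norm x = 0 -> x = vzero.
Proof. intro H. apply dot_eq0. rewrite <- norm_sq', H. ring. Qed.
Lemma norm_zero n : norm (@vzero n) = 0.
Proof. unfold norm. rewrite dot_zero_l. apply sqrt_0. Qed.

Lemma norm_scal n a (x : vec n) : norm (vscal a x) = Rabs a * norm x.
Proof. unfold norm. rewrite dot_scal_l, dot_scal_r.
  replace (a * (a * dot x x)) with (Rsqr a * dot x x) by (unfold Rsqr; ring).
  rewrite sqrt_mult_alt by apply Rle_0_sqr. rewrite sqrt_Rsqr_abs. reflexivity. Qed.

Lemma cauchy_schwarz n (x y : vec n) : Rabs (dot x y) <= norm x * norm y.
Proof.
  pose proof (norm_ge0 _ x). pose proof (norm_ge0 _ y).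
  destruct (Req_dec (norm x) 0) as [Hx|Hx].
  { apply norm_eq0 in Hx. subst. rewrite dot_zero_l, norm_zero, Rabs_R0. lra. }
  destruct (Req_dec (norm y) 0) as [Hy|Hy].
  { apply norm_eq0 in Hy. subst. rewrite dot_zero_r, norm_zero, Rabs_R0. lra. }
  set (a := norm x) in *. set (b := norm y) in *.
  pose proof (dot_pos _ (vsub (vscal b x) (vscal a y))) as P1.
  pose proof (dot_pos _ (vadd (vscal b x) (vscal a y))) as P2.
  rewrite !dot_sub_l, !dot_sub_r, !dot_scal_l, !dot_scal_r in P1.
  rewrite !dot_add_l, !dot_add_r, !dot_scal_l, !dot_scal_r in P2.
  rewrite (dot_comm _ y x) in P1, P2.
  assert (dot x x = a*a) by (unfold a; rewrite norm_sq'; auto).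
  assert (dot y y = b*b) by (unfold b; rewrite norm_sq'; auto).
  rewrite H1, H2 in P1, P2.
  assert (0 < a*b) by (apply Rmult_lt_0_compat; lra).
  apply Rabs_le. split.
  - assert (a*b*(a*b + dot x y) >= 0) by nra. nra.
  - assert (a*b*(a*b - dot x y) >= 0) by nra. nra.
Qed.

Lemma norm_triangle n (x y : vec n) : norm (vadd x y) <= norm x + norm y.
Proof.
  pose proof (norm_ge0 _ x). pose proof (norm_ge0 _ y). pose proof (norm_ge0 _ (vadd x y)).
  apply Rsqr_incr_0_var; [|lra]. unfold Rsqr. rewrite norm_sq'.
  rewrite dot_add_l, !dot_add_r, (dot_comm _ y x), <- !norm_sq'.
  pose proof (cauchy_schwarz _ x y). pose proof (Rle_abs (dot x y)). nra.
Qed.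

Lemma vsub_vadd n (x y : vec n) : vsub x y = vadd x (vscal (-1) y).
Proof. apply functional_extensionality; intro i; unfold vsub, vadd, vscal; ring. Qed.

Lemma norm_opp n (x : vec n) : norm (vscal (-1) x) = norm x.
Proof. rewrite norm_scal, Rabs_left by lra. ring. Qed.

Lemma norm_sub_sym n (x y : vec n) : norm (vsub x y) = norm (vsub y x).
Proof. replace (vsub x y) with (vscal (-1) (vsub y x)). apply norm_opp.
  apply functional_extensionality; intro i; unfold vsub, vscal; ring. Qed.

Lemma norm_sub_tri n (x y z : vec n) : norm (vsub x z) <= norm (vsub x y) + norm (vsub y z).
Proof. replace (vsub x z) with (vadd (vsub x y) (vsub y z)). apply norm_triangle.
  apply functional_extensionality; intro i; unfold vsub, vadd; ring. Qed.

Lemma norm_sub_ge n (x y : vec n) : Rabs (norm x - norm y) <= norm (vsub x y).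
Proof.
  assert (x = vadd (vsub x y) y) as E1 by (apply functional_extensionality; intro i; unfold vsub, vadd; ring).
  assert (y = vadd (vsub y x) x) as E2 by (apply functional_extensionality; intro i; unfold vsub, vadd; ring).
  pose proof (norm_triangle _ (vsub x y) y). rewrite <- E1 in H.
  pose proof (norm_triangle _ (vsub y x) x). rewrite <- E2 in H0.
  rewrite (norm_sub_sym _ y x) in H0. apply Rabs_le. lra.
Qed.

Lemma norm_sub0 n (x : vec n) : vsub x vzero = x.
Proof. apply functional_extensionality; intro i; unfold vsub, vzero; ring. Qed.
Lemma norm_0sub n (x : vec n) : norm (vsub vzero x) = norm x.
Proof. rewrite norm_sub_sym, norm_sub0. auto. Qed.

Lemma norm_pos_neq n (x : vec n) : x <> vzero -> norm x > 0.
Proof. intros H. destruct (norm_ge0 _ x); auto. exfalso. apply H, norm_eq0. auto. Qed.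

Lemma vsub_eq0 n (x y : vec n) : vsub x y = vzero -> x = y.
Proof. intro H. apply functional_extensionality; intro i.
  assert (vsub x y i = 0) by (rewrite H; auto). unfold vsub in H0. lra. Qed.

Lemma dot_le_norm2 n (x y : vec n) : dot x y <= norm x * norm y.
Proof. pose proof (cauchy_schwarz _ x y). pose proof (Rle_abs (dot x y)). lra. Qed.
Lemma dot_ge_norm2 n (x y : vec n) : - (norm x * norm y) <= dot x y.
Proof. pose proof (cauchy_schwarz _ x y). pose proof (Rle_abs (- dot x y)).
  rewrite Rabs_Ropp in H0. lra. Qed.

Lemma splitat_L n m (i : Fin.t n) : splitat n m (Fin.L m i) = inl i.
Proof. induction i. reflexivity. simpl. rewrite IHi. reflexivity. Qed.

Lemma splitat_R n m (j : Fin.t m) : splitat n m (Fin.R n j) = inr j.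
Proof. induction n. reflexivity. simpl. rewrite IHn. reflexivity. Qed.

Lemma fin_case k (i : Fin.t (S k)) : i = Fin.F1 \/ exists p, i = Fin.FS p.
Proof. apply (Fin.caseS' i (fun i => i = Fin.F1 \/ exists p, i = Fin.FS p)); eauto. Qed.

Lemma splitat_inv n m (i : Fin.t (n + m)) :
  match splitat n m i with inl j => i = Fin.L m j | inr j => i = Fin.R n j end.
Proof.
  revert i. induction n. intro; reflexivity.
  intro i. destruct (fin_case (n + m) i) as [->|[p ->]]. reflexivity.
  simpl. specialize (IHn p). destruct (splitat n m p); subst; reflexivity.
Qed.

Definition fstv {n m} (p : vec (n + m)) : vec n := fun i => p (Fin.L m i).
Definition sndv {n m} (p : vec (n + m)) : vec m := fun j => p (Fin.R n j).

Lemma fst_pairv n m (a : vec n) (b : vec m) : fstv (pairv a b) = a.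
Proof. apply functional_extensionality; intro i. unfold fstv, pairv. rewrite splitat_L. auto. Qed.
Lemma snd_pairv n m (a : vec n) (b : vec m) : sndv (pairv a b) = b.
Proof. apply functional_extensionality; intro i. unfold sndv, pairv. rewrite splitat_R. auto. Qed.
Lemma pairv_eta n m (p : vec (n + m)) : pairv (fstv p) (sndv p) = p.
Proof. apply functional_extensionality; intro i. unfold fstv, sndv, pairv.
  pose proof (splitat_inv n m i). destruct (splitat n m i); subst; auto. Qed.

Lemma dot_pairv n m (a c : vec n) (b d : vec m) :
  dot (pairv a b) (pairv c d) = dot a c + dot b d.
Proof.
  induction n. transitivity (dot b d). reflexivity. simpl. ring.
  assert (forall (a : vec (S n)) (b : vec m), (fun i => pairv a b (Fin.FS i)) = pairv (fun i => a (Fin.FS i)) b) as E.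
  { intros. apply functional_extensionality; intro i. unfold pairv. simpl. destruct (splitat n m i); auto. }
  change (dot (pairv a b) (pairv c d)) with
    (a Fin.F1 * c Fin.F1 + dot (fun i => pairv a b (Fin.FS i)) (fun i => pairv c d (Fin.FS i))).
  rewrite !E, IHn. rewrite dot_S. ring.
Qed.

Lemma pairv_add n m (a c : vec n) (b d : vec m) : vadd (pairv a b) (pairv c d) = pairv (vadd a c) (vadd b d).
Proof. apply functional_extensionality; intro i. unfold pairv, vadd. destruct (splitat n m i); auto. Qed.
Lemma pairv_sub n m (a c : vec n) (b d : vec m) : vsub (pairv a b) (pairv c d) = pairv (vsub a c) (vsub b d).
Proof. apply functional_extensionality; intro i. unfold pairv, vsub. destruct (splitat n m i); auto. Qed.
Lemma pairv_scal n m t (a : vec n) (b : vec m) : vscal t (pairv a b) = pairv (vscal t a) (vscal t b).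
Proof. apply functional_extensionality; intro i. unfold pairv, vscal. destruct (splitat n m i); auto. Qed.

Lemma norm_pairv_sq n m (a : vec n) (b : vec m) : norm (pairv a b) ^ 2 = norm a ^ 2 + norm b ^ 2.
Proof. rewrite !norm_sq. apply dot_pairv. Qed.

Lemma norm_pairv_ge_l n m (a : vec n) (b : vec m) : norm a <= norm (pairv a b).
Proof. pose proof (norm_pairv_sq _ _ a b). pose proof (norm_ge0 _ a). pose proof (norm_ge0 _ (pairv a b)).
  pose proof (norm_ge0 _ b). apply Rsqr_incr_0_var; auto. unfold Rsqr. nra. Qed.
Lemma norm_pairv_ge_r n m (a : vec n) (b : vec m) : norm b <= norm (pairv a b).
Proof. pose proof (norm_pairv_sq _ _ a b). pose proof (norm_ge0 _ b). pose proof (norm_ge0 _ (pairv a b)).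
  pose proof (norm_ge0 _ a). apply Rsqr_incr_0_var; auto. unfold Rsqr. nra. Qed.
Lemma norm_pairv_le n m (a : vec n) (b : vec m) : norm (pairv a b) <= norm a + norm b.
Proof. pose proof (norm_pairv_sq _ _ a b). pose proof (norm_ge0 _ b). pose proof (norm_ge0 _ (pairv a b)).
  pose proof (norm_ge0 _ a). apply Rsqr_incr_0_var; [|lra]. unfold Rsqr. nra. Qed.

Lemma norm_rv t : norm (rv t) = Rabs t.
Proof. unfold norm. simpl. unfold rv. replace (t * t + 0) with (Rsqr t) by (unfold Rsqr; ring).
  apply sqrt_Rsqr_abs. Qed.
Lemma dot_rv s t : dot (rv s) (rv t) = s * t.
Proof. simpl. unfold rv. ring. Qed.

Definition subseq (phi : nat -> nat) := forall j, (phi j < phi (S j))%nat.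

Lemma subseq_ge phi : subseq phi -> forall j, (j <= phi j)%nat.
Proof. intros H j. induction j. lia. specialize (H j). lia. Qed.

Lemma subseq_mono phi : subseq phi -> forall i j, (i <= j)%nat -> (phi i <= phi j)%nat.
Proof. intros H i j Hij. induction Hij. lia. specialize (H m). lia. Qed.

Lemma subseq_comp phi psi : subseq phi -> subseq psi -> subseq (fun j => phi (psi j)).
Proof. intros H1 H2 j. pose proof (subseq_mono phi H1 (S (psi j)) (psi (S j)) (H2 j)).
  specialize (H1 (psi j)). lia. Qed.

Lemma Un_cv_sub u l phi : Un_cv u l -> subseq phi -> Un_cv (fun j => u (phi j)) l.
Proof. intros H Hp eps He. destruct (H eps He) as [N HN]. exists N. intros j Hj.
  apply HN. pose proof (subseq_ge phi Hp j). lia. Qed.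

Lemma vconv_sub n (u : nat -> vec n) l phi : vconv u l -> subseq phi -> vconv (fun j => u (phi j)) l.
Proof. intros H Hp eps He. destruct (H eps He) as [N HN]. exists N. intros j Hj.
  apply HN. pose proof (subseq_ge phi Hp j). lia. Qed.

Lemma BW1 (u : nat -> R) M : (forall k, Rabs (u k) <= M) ->
  exists phi l, subseq phi /\ Un_cv (fun j => u (phi j)) l.
Proof.
  intro HM.
  destruct (Bolzano_Weierstrass u (fun c => -M <= c <= M) (compact_P3 _ _)) as [l Hl].
  { intro k. specialize (HM k). pose proof (Rle_abs (u k)). pose proof (Rle_abs (- u k)). rewrite Rabs_Ropp in H0. lra. }
  assert (G : forall N j, exists p, (N <= p)%nat /\ Rabs (u p - l) < / INR (S j)).
  { intros N j. assert (Hp : 0 < / INR (S j)) by (apply Rinv_0_lt_compat, lt_0_INR; lia).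
    destruct (Hl (disc l (mkposreal _ Hp)) N) as [p [Hp1 Hp2]].
    - exists (mkposreal _ Hp). intros y Hy. exact Hy.
    - exists p. split; auto. }
  pose (g := fun N j => proj1_sig (constructive_indefinite_description _ (G N j))).
  assert (Hg : forall N j, (N <= g N j)%nat /\ Rabs (u (g N j) - l) < / INR (S j)).
  { intros. unfold g. destruct (constructive_indefinite_description _ (G N j)). auto. }
  pose (phi := fix phi j := match j with O => g O O | S j' => g (S (phi j')) (S j') end).
  exists phi, l. split.
  - intro j. simpl. destruct (Hg (S (phi j)) (S j)). lia.
  - intros eps He. destruct (archimed_cor1 eps He) as [N [HN1 HN2]].
    exists N. intros j Hj. unfold R_dist.
    assert (Rabs (u (phi j) - l) < / INR (S j)).
    { destruct j; simpl; apply Hg. }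
    eapply Rlt_trans; [apply H|]. eapply Rle_lt_trans; [|apply HN1].
    apply Rinv_le_contravar. apply lt_0_INR; lia. apply le_INR. lia.
Qed.

Definition vtail {n} (x : vec (S n)) : vec n := fun i => x (Fin.FS i).
Definition vcons {n} (a : R) (t : vec n) : vec (S n) := fun i => Fin.caseS' i (fun _ => R) a t.

Lemma norm_S_le n (x : vec (S n)) : norm x <= Rabs (x Fin.F1) + norm (vtail x).
Proof. unfold norm at 1. rewrite dot_S. pose proof (norm_ge0 _ (vtail x)).
  pose proof (Rabs_pos (x Fin.F1)). apply Rsqr_incr_0_var; [|lra].
  rewrite Rsqr_sqrt. unfold Rsqr.
  change (dot (fun i => x (Fin.FS i)) (fun i => x (Fin.FS i))) with (dot (vtail x) (vtail x)).
  rewrite <- norm_sq'. assert (Rabs (x Fin.F1) * Rabs (x Fin.F1) = x Fin.F1 * x Fin.F1).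
  { rewrite <- Rabs_mult. apply Rabs_right. nra. } nra.
  pose proof (dot_pos _ (vtail x)). unfold vtail in H1. nra.
Qed.

Lemma norm_head_le n (x : vec (S n)) : Rabs (x Fin.F1) <= norm x.
Proof. unfold norm. rewrite dot_S. rewrite <- sqrt_Rsqr_abs. apply sqrt_le_1_alt.
  pose proof (dot_pos _ (vtail x)). unfold vtail in H. unfold Rsqr. lra. Qed.

Lemma norm_tail_le n (x : vec (S n)) : norm (vtail x) <= norm x.
Proof. unfold norm at 2. rewrite dot_S. unfold norm. apply sqrt_le_1_alt.
  pose proof (Rle_0_sqr (x Fin.F1)). unfold Rsqr in H. unfold vtail. lra. Qed.

Lemma norm_vec0 (x : vec 0) : norm x = 0.
Proof. unfold norm. simpl. apply sqrt_0. Qed.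

Lemma BWn n (u : nat -> vec n) M : (forall k, norm (u k) <= M) ->
  exists phi l, subseq phi /\ vconv (fun j => u (phi j)) l.
Proof.
  revert u M. induction n; intros u M HM.
  - exists (fun j => j), vzero. split. intro; lia. intros eps He. exists O. intros. rewrite norm_vec0. lra.
  - destruct (BW1 (fun k => u k Fin.F1) M) as [phi1 [l1 [Hp1 Hc1]]].
    { intro k. eapply Rle_trans; [apply norm_head_le|apply HM]. }
    destruct (IHn (fun j => vtail (u (phi1 j))) M) as [phi2 [l2 [Hp2 Hc2]]].
    { intro k. eapply Rle_trans; [apply norm_tail_le|apply HM]. }
    exists (fun j => phi1 (phi2 j)), (vcons l1 l2). split. apply subseq_comp; auto.
    intros eps He. pose proof (Un_cv_sub _ _ _ Hc1 Hp2) as Hc1'.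
    destruct (Hc1' (eps/2)) as [N1 HN1]; [lra|]. destruct (Hc2 (eps/2)) as [N2 HN2]; [lra|].
    exists (max N1 N2). intros k Hk. eapply Rle_lt_trans; [apply norm_S_le|].
    specialize (HN1 k ltac:(lia)). specialize (HN2 k ltac:(lia)). unfold R_dist in HN1.
    change (vsub (u (phi1 (phi2 k))) (vcons l1 l2) Fin.F1) with (u (phi1 (phi2 k)) Fin.F1 - l1).
    change (vtail (vsub (u (phi1 (phi2 k))) (vcons l1 l2))) with (vsub (vtail (u (phi1 (phi2 k)))) l2).
    lra.
Qed.

Lemma vconv_iff n (u : nat -> vec n) l : vconv u l <-> Un_cv (fun k => norm (vsub (u k) l)) 0.
Proof. split; intros H eps He; destruct (H eps He) as [N HN]; exists N; intros k Hk; specialize (HN k Hk).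
  - unfold R_dist. rewrite Rminus_0_r, Rabs_right; auto. apply Rle_ge, norm_ge0.
  - unfold R_dist in HN. rewrite Rminus_0_r, Rabs_right in HN; auto. apply Rle_ge, norm_ge0.
Qed.

Lemma vconv_const n (l : vec n) : vconv (fun _ => l) l.
Proof. intros eps He. exists O. intros. replace (vsub l l) with (@vzero n). rewrite norm_zero. lra.
  apply functional_extensionality; intro; unfold vsub, vzero; ring. Qed.

Lemma vconv_norm n (u : nat -> vec n) l : vconv u l -> Un_cv (fun k => norm (u k)) (norm l).
Proof. intros H eps He. destruct (H eps He) as [N HN]. exists N. intros k Hk. unfold R_dist.
  eapply Rle_lt_trans; [apply norm_sub_ge|]. auto. Qed.

Lemma vconv_add n (u v : nat -> vec n) a b : vconv u a -> vconv v b -> vconv (fun k => vadd (u k) (v k)) (vadd a b).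
Proof. intros Hu Hv eps He. destruct (Hu (eps/2)) as [N1 H1]; [lra|]. destruct (Hv (eps/2)) as [N2 H2]; [lra|].
  exists (max N1 N2). intros k Hk. specialize (H1 k ltac:(lia)). specialize (H2 k ltac:(lia)).
  replace (vsub (vadd (u k) (v k)) (vadd a b)) with (vadd (vsub (u k) a) (vsub (v k) b)).
  eapply Rle_lt_trans; [apply norm_triangle|]. lra.
  apply functional_extensionality; intro; unfold vsub, vadd; ring. Qed.

Lemma vconv_scal n (u : nat -> vec n) a (t : nat -> R) c : vconv u a -> Un_cv t c ->
  vconv (fun k => vscal (t k) (u k)) (vscal c a).
Proof.
  intros Hu Ht. apply vconv_iff. apply vconv_iff in Hu.
  assert (Hb : exists B, forall k, Rabs (t k) <= B).
  { destruct (Ht 1) as [N HN]; [lra|].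
    assert (exists B, forall k, (k < N)%nat -> Rabs (t k) <= B) as [B HB].
    { clear HN. induction N. exists 0. intros; lia. destruct IHN as [B HB]. exists (Rmax B (Rabs (t N))).
      intros k Hk. destruct (Nat.eq_dec k N). subst. apply Rmax_r. eapply Rle_trans; [apply HB; lia|apply Rmax_l]. }
    exists (Rmax B (Rabs c + 1)). intros k. destruct (Nat.lt_ge_cases k N).
    eapply Rle_trans; [apply HB; auto|apply Rmax_l].
    specialize (HN k H). unfold R_dist in HN. eapply Rle_trans; [|apply Rmax_r].
    pose proof (Rabs_triang_inv (t k) c). lra. }
  destruct Hb as [B HB].
  assert (Hle : forall k, norm (vsub (vscal (t k) (u k)) (vscal c a)) <= B * norm (vsub (u k) a) + Rabs (t k - c) * norm a).
  { intro k. replace (vsub (vscal (t k) (u k)) (vscal c a)) with (vadd (vscal (t k) (vsub (u k) a)) (vscal (t k - c) a)).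
    eapply Rle_trans; [apply norm_triangle|]. rewrite !norm_scal. pose proof (norm_ge0 _ (vsub (u k) a)).
    specialize (HB k). nra.
    apply functional_extensionality; intro; unfold vsub, vadd, vscal; ring. }
  intros eps He. pose proof (norm_ge0 _ a).
  destruct (Hu (eps / (2 * (Rabs B + 1)))) as [N1 H1].
  { apply Rdiv_lt_0_compat; [lra|]. pose proof (Rabs_pos B). lra. }
  destruct (Ht (eps / (2 * (norm a + 1)))) as [N2 H2]. { apply Rdiv_lt_0_compat; lra. }
  exists (max N1 N2). intros k Hk. specialize (H1 k ltac:(lia)). specialize (H2 k ltac:(lia)).
  unfold R_dist in *. rewrite Rminus_0_r in *. rewrite Rabs_right in H1 by apply Rle_ge, norm_ge0.
  rewrite Rabs_right by apply Rle_ge, norm_ge0.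
  specialize (Hle k). pose proof (Rabs_pos B). pose proof (Rle_abs B). pose proof (norm_ge0 _ (vsub (u k) a)).
  assert (B * norm (vsub (u k) a) < eps/2).
  { apply Rle_lt_trans with ((Rabs B + 1) * norm (vsub (u k) a)). nra.
    apply Rlt_le_trans with ((Rabs B + 1) * (eps / (2 * (Rabs B + 1)))).
    apply Rmult_lt_compat_l; lra. right. field. lra. }
  assert (Rabs (t k - c) * norm a <= eps/2).
  { apply Rle_trans with ((eps / (2 * (norm a + 1))) * (norm a + 1)).
    pose proof (Rabs_pos (t k - c)). nra. right. field. lra. }
  lra.
Qed.

Lemma xle_refl a : xle a a.
Proof. destruct a; simpl; auto; lra. Qed.
Lemma xle_trans a b c : xle a b -> xle b c -> xle a c.
Proof. destruct a, b, c; simpl; auto; try tauto; lra. Qed.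
Lemma xle_antisym a b : xle a b -> xle b a -> a = b.
Proof. destruct a, b; simpl; try tauto; intros; f_equal; lra. Qed.
Lemma xle_PInf a : xle a PInf.
Proof. destruct a; simpl; auto. Qed.
Lemma xle_MInf a : xle MInf a.
Proof. destruct a; simpl; auto. Qed.
Lemma xle_total a b : xle a b \/ xle b a.
Proof. destruct a, b; simpl; auto. lra. Qed.

Lemma xle_eps_up a c : (forall eta, eta > 0 -> xle a (Fin (c + eta))) -> xle a (Fin c).
Proof. intro H. destruct a; simpl; auto.
  - destruct (Rle_dec r c); auto. specialize (H ((r - c)/2)). simpl in H. lra.
  - specialize (H 1). simpl in H. apply H. lra. Qed.
Lemma xle_eps_down a c : (forall eta, eta > 0 -> xle (Fin (c - eta)) a) -> xle (Fin c) a.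
Proof. intro H. destruct a; simpl; auto.
  - specialize (H 1). simpl in H. apply H. lra.
  - destruct (Rle_dec c r); auto. specialize (H ((c - r)/2)). simpl in H. lra. Qed.

Lemma is_sup_unique S a b : is_sup S a -> is_sup S b -> a = b.
Proof. intros [H1 H2] [H3 H4]. apply xle_antisym; auto. Qed.
Lemma is_inf_unique S a b : is_inf S a -> is_inf S b -> a = b.
Proof. intros [H1 H2] [H3 H4]. apply xle_antisym; auto. Qed.

Lemma sup_exists (S : xreal -> Prop) : exists a, is_sup S a.
Proof.
  destruct (classic (S PInf)) as [HP|HP].
  { exists PInf. split. intros s _. apply xle_PInf. intros b Hb. apply Hb, HP. }
  destruct (classic (exists r, S (Fin r))) as [[r0 Hr0]|HE].
  2:{ exists MInf. split.
      - intros s Hs. destruct s; simpl; auto. apply HE; eauto.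
      - intros; apply xle_MInf. }
  destruct (classic (exists M, forall r, S (Fin r) -> r <= M)) as [[M HM]|HU].
  - destruct (completeness (fun r => S (Fin r))) as [l [Hl1 Hl2]].
    { exists M. intros r Hr. apply HM, Hr. }
    { eauto. }
    exists (Fin l). split.
    + intros s Hs. destruct s; simpl; auto; try contradiction; apply Hl1; auto.
    + intros b Hb. destruct b; simpl.
      * specialize (Hb _ Hr0). simpl in Hb. auto.
      * apply Hl2. intros x Hx. specialize (Hb _ Hx). simpl in Hb. auto.
      * auto.
  - exists PInf. split. intros s _; apply xle_PInf.
    intros b Hb. destruct b; simpl; auto.
    + specialize (Hb _ Hr0). simpl in Hb. auto.
    + exfalso. apply HU. exists r. intros x Hx. specialize (Hb _ Hx). simpl in Hb. auto.
Qed.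

Definition xneg (a : xreal) := match a with MInf => PInf | Fin r => Fin (- r) | PInf => MInf end.
Lemma xneg_invol a : xneg (xneg a) = a.
Proof. destruct a; simpl; auto. f_equal; ring. Qed.
Lemma xle_neg a b : xle (xneg a) (xneg b) <-> xle b a.
Proof. destruct a, b; simpl; try tauto; lra. Qed.

Lemma inf_exists (S : xreal -> Prop) : exists a, is_inf S a.
Proof.
  destruct (sup_exists (fun s => S (xneg s))) as [a [H1 H2]].
  exists (xneg a). split.
  - intros s Hs. rewrite <- (xneg_invol s). apply xle_neg. apply H1. rewrite xneg_invol. auto.
  - intros b Hb. rewrite <- (xneg_invol b). apply xle_neg. apply H2. intros s Hs.
    rewrite <- (xneg_invol s). apply xle_neg. apply Hb. auto.
Qed.

Lemma vsub_rv t s : vsub (rv t) (rv s) = rv (t - s).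
Proof. apply functional_extensionality; intro; reflexivity. Qed.

Lemma reg_subdiff n (f : vec n -> xreal) x fx v C d :
  f x = Fin fx -> d > 0 -> C >= 0 ->
  (forall y, norm (vsub y x) < d -> xle (Fin (fx + dot v (vsub y x) - C * norm (vsub y x) ^ 2)) (f y)) ->
  subdiff f x v.
Proof.
  intros Hx Hd HC Hy. exists fx. split; auto.
  assert (Hu : epi f (pairv x (rv fx))). { exists x, fx. split. reflexivity. rewrite Hx. simpl. lra. }
  split; auto.
  exists (fun _ => pairv x (rv fx)), (fun _ => pairv v (rv (-1))).
  split; [auto|split; [apply vconv_const|split; [apply vconv_const|]]].
  intros _. split; auto. intros e He.
  exists (Rmin d (e / (C + 1))). split. apply Rmin_pos; auto. apply Rdiv_lt_0_compat; lra.
  intros u' [y [t [-> Ht]]] Hn.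
  rewrite pairv_sub, dot_pairv, vsub_rv, dot_rv. rewrite pairv_sub, vsub_rv in Hn.
  pose proof (norm_pairv_ge_l _ _ (vsub y x) (rv (t - fx))).
  assert (Rmin d (e / (C + 1)) <= d) by apply Rmin_l.
  assert (Rmin d (e / (C + 1)) <= e / (C+1)) by apply Rmin_r.
  specialize (Hy y ltac:(lra)).
  assert (fx + dot v (vsub y x) - C * norm (vsub y x) ^ 2 <= t).
  { destruct (f y); simpl in *; try tauto; lra. }
  set (a := norm (vsub y x)) in *. set (b := norm (pairv (vsub y x) (rv (t - fx)))) in *.
  pose proof (norm_ge0 _ (vsub y x)) as Ha. fold a in Ha.
  assert (C * a ^ 2 <= e * b).
  { assert (a <= e / (C+1)) by lra.
    assert (C * a <= e) by (apply Rle_trans with ((C+1) * (e/(C+1))); [nra| right; field; lra]).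
    nra. }
  lra.
Qed.

Lemma gder_iff n (f : vec n -> xreal) xb w z :
  gder f xb vzero w z <-> exists (t : nat -> R) (wk zk : nat -> vec n), down_to_0 t /\ vconv wk w /\ vconv zk z /\
    forall k, subdiff f (vadd xb (vscal (t k) (wk k))) (vscal (t k) (zk k)).
Proof.
  split.
  - intros [t [vk [Ht [Hv Hm]]]]. exists t, (fun k => fstv (vk k)), (fun k => sndv (vk k)).
    split; auto. split; [|split].
    + intros e He. destruct (Hv e He) as [N HN]. exists N. intros k Hk.
      eapply Rle_lt_trans; [|apply (HN k Hk)].
      rewrite <- (pairv_eta _ _ (vsub (vk k) (pairv w z))). 
      change (fstv (vsub (vk k) (pairv w z))) with (vsub (fstv (vk k)) (fstv (pairv w z))).
      rewrite fst_pairv. apply norm_pairv_ge_l.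
    + intros e He. destruct (Hv e He) as [N HN]. exists N. intros k Hk.
      eapply Rle_lt_trans; [|apply (HN k Hk)].
      rewrite <- (pairv_eta _ _ (vsub (vk k) (pairv w z))). 
      change (sndv (vsub (vk k) (pairv w z))) with (vsub (sndv (vk k)) (sndv (pairv w z))).
      rewrite snd_pairv. apply norm_pairv_ge_r.
    + intro k. destruct (Hm k) as [x [v [E Hs]]].
      assert (Ex : x = vadd xb (vscal (t k) (fstv (vk k)))).
      { rewrite <- (fst_pairv _ _ x v), <- E. change (fstv (vadd (pairv xb vzero) (vscal (t k) (vk k))))
          with (vadd (fstv (pairv xb (@vzero n))) (vscal (t k) (fstv (vk k)))). rewrite fst_pairv. auto. }
      assert (Ev : v = vscal (t k) (sndv (vk k))).
      { rewrite <- (snd_pairv _ _ x v), <- E. change (sndv (vadd (pairv xb vzero) (vscal (t k) (vk k))))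
          with (vadd (sndv (pairv xb (@vzero n))) (vscal (t k) (sndv (vk k)))). rewrite snd_pairv.
        apply functional_extensionality; intro; unfold vadd, vzero; ring. }
      subst; auto.
  - intros [t [wk [zk [Ht [Hw [Hz Hs]]]]]]. exists t, (fun k => pairv (wk k) (zk k)).
    split; auto. split.
    + intros e He. destruct (Hw (e/2)) as [N1 H1]; [lra|]. destruct (Hz (e/2)) as [N2 H2]; [lra|].
      exists (max N1 N2). intros k Hk. rewrite pairv_sub. eapply Rle_lt_trans; [apply norm_pairv_le|].
      specialize (H1 k ltac:(lia)). specialize (H2 k ltac:(lia)). lra.
    + intro k. exists (vadd xb (vscal (t k) (wk k))), (vscal (t k) (zk k)). split; auto.
      rewrite pairv_scal, pairv_add. f_equal. apply functional_extensionality; intro; unfold vadd, vzero; ring.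
Qed.

Definition xaddr (e : xreal) (s : R) := match e with Fin y => Fin (y + s) | o => o end.

Lemma xlt_Fin_iff a e : xlt (Fin a) e <-> match e with Fin y => a < y | PInf => True | MInf => False end.
Proof. unfold xlt. destruct e; simpl; split; intros.
  - tauto. - tauto. - destruct H as [H1 H2]. destruct H1; auto. subst; tauto. - split. lra. intro E; injection E; lra.
  - auto. - split; auto; discriminate. Qed.

Lemma evt n (g : vec n -> xreal) (c : vec n -> R) (a : vec n) (rho L : R) :
  lsc g -> (forall x, g x <> MInf) ->
  (forall x eta, eta > 0 -> exists d, d > 0 /\ forall y, norm (vsub y x) < d -> Rabs (c y - c x) < eta) ->
  rho > 0 -> (forall x, norm (vsub x a) <= rho -> xle (Fin L) (xaddr (g x) (c x))) ->
  (exists x0, norm (vsub x0 a) <= rho /\ g x0 <> PInf) ->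
  exists xs, norm (vsub xs a) <= rho /\ forall x, norm (vsub x a) <= rho -> xle (xaddr (g xs) (c xs)) (xaddr (g x) (c x)).
Proof.
  intros Hl Hm Hc Hrho HL [x0 [Hx0 Hx0']].
  set (G := fun x => xaddr (g x) (c x)).
  destruct (inf_exists (fun s => exists x, norm (vsub x a) <= rho /\ s = G x)) as [m [Hm1 Hm2]].
  assert (HLm : xle (Fin L) m). { apply Hm2. intros s [x [Hx ->]]. apply HL; auto. }
  assert (Hm0 : xle m (G x0)). { apply Hm1. eauto. }
  assert (exists mu, m = Fin mu) as [mu Emu].
  { unfold G in Hm0. destruct m; simpl in *; try tauto. eauto. destruct (g x0); simpl in *; tauto. }
  subst m.
  assert (Hseq : forall j : nat, exists x, norm (vsub x a) <= rho /\ xle (G x) (Fin (mu + / INR (S j)))).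
  { intro j. apply NNPP. intro Hn.
    assert (xle (Fin (mu + / INR (S j))) (Fin mu)) as Hc0.
    { apply Hm2. intros s [x [Hx ->]]. destruct (xle_total (G x) (Fin (mu + / INR (S j)))); auto.
      exfalso; eauto. }
    change (mu + / INR (S j) <= mu) in Hc0. assert (0 < / INR (S j)) by (apply Rinv_0_lt_compat, lt_0_INR; lia). lra. }
  destruct (choice _ Hseq) as [xj Hxj].
  destruct (BWn n xj (norm a + rho)) as [phi [xs [Hphi Hcv]]].
  { intro k. destruct (Hxj k) as [H _]. pose proof (norm_sub_tri _ (xj k) a vzero). rewrite !norm_sub0 in H0. lra. }
  assert (Hxs : norm (vsub xs a) <= rho).
  { apply Rnot_lt_le. intro Hlt. set (e := norm (vsub xs a) - rho).
    destruct (Hcv e) as [N HN]. unfold e; lra. specialize (HN N ltac:(lia)).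
    pose proof (norm_sub_tri _ xs (xj (phi N)) a). rewrite norm_sub_sym in HN.
    destruct (Hxj (phi N)). unfold e in HN. lra. }
  exists xs. split; auto.
  assert (HG : xle (G xs) (Fin mu)).
  { apply NNPP. intro Hge.
    assert (exists l, mu < l /\ xlt (Fin l) (G xs)) as [l [Hl1 Hl2]].
    { destruct (G xs) eqn:EG; simpl in Hge.
      - tauto.
      - exists ((mu + r)/2). split. lra. apply xlt_Fin_iff. lra.
      - exists (mu + 1). split. lra. apply xlt_Fin_iff. auto. }
    assert (Hnb : exists d, d > 0 /\ forall y, norm (vsub y xs) < d -> xlt (Fin l) (G y)).
    { unfold G in Hl2. apply xlt_Fin_iff in Hl2.
      destruct (g xs) eqn:Eg; simpl in Hl2; [tauto| |].
      - set (eta := (r + c xs - l)/2).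
        destruct (Hl xs (r - eta)) as [d1 [Hd1 H1]]. rewrite Eg. apply xlt_Fin_iff. unfold eta; lra.
        destruct (Hc xs eta) as [d2 [Hd2 H2]]. unfold eta; lra.
        exists (Rmin d1 d2). split. apply Rmin_pos; auto. intros y Hy.
        assert (Rmin d1 d2 <= d1) by apply Rmin_l. assert (Rmin d1 d2 <= d2) by apply Rmin_r.
        specialize (H1 y ltac:(lra)). specialize (H2 y ltac:(lra)). apply Rabs_def2 in H2.
        apply xlt_Fin_iff in H1. apply xlt_Fin_iff. unfold G. destruct (g y); simpl; auto. unfold eta in *. lra.
      - destruct (Hl xs (l - c xs + 1)) as [d1 [Hd1 H1]]. rewrite Eg. apply xlt_Fin_iff. auto.
        destruct (Hc xs 1) as [d2 [Hd2 H2]]. lra.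
        exists (Rmin d1 d2). split. apply Rmin_pos; auto. intros y Hy.
        assert (Rmin d1 d2 <= d1) by apply Rmin_l. assert (Rmin d1 d2 <= d2) by apply Rmin_r.
        specialize (H1 y ltac:(lra)). specialize (H2 y ltac:(lra)). apply Rabs_def2 in H2.
        apply xlt_Fin_iff in H1. apply xlt_Fin_iff. unfold G. destruct (g y); simpl; auto. lra. }
    destruct Hnb as [d [Hd Hnb]].
    destruct (Hcv d Hd) as [N1 HN1].
    destruct (archimed_cor1 (l - mu) ltac:(lra)) as [N2 [HN2 HN2']].
    set (k := max N1 N2).
    specialize (Hnb _ (HN1 k ltac:(lia))). apply xlt_Fin_iff in Hnb.
    destruct (Hxj (phi k)) as [_ Hle].
    assert (/ INR (S (phi k)) <= / INR N2).
    { apply Rinv_le_contravar. apply lt_0_INR; lia. apply le_INR. pose proof (subseq_ge _ Hphi k). lia. }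
    destruct (G (xj (phi k))); simpl in *; try tauto; lra. }
  intros x Hx. apply xle_trans with (Fin mu); auto. apply Hm1. eauto.
Qed.

Lemma Un_cv_const c : Un_cv (fun _ => c) c.
Proof. intros e He. exists O. intros. unfold R_dist. rewrite Rminus_diag, Rabs_R0. lra. Qed.

Lemma vconv_sub_v n (u v : nat -> vec n) a b : vconv u a -> vconv v b -> vconv (fun k => vsub (u k) (v k)) (vsub a b).
Proof. intros Hu Hv. rewrite vsub_vadd. 
  assert ((fun k => vsub (u k) (v k)) = (fun k => vadd (u k) (vscal (-1) (v k)))) as ->.
  { apply functional_extensionality; intro; apply vsub_vadd. }
  apply vconv_add; auto. apply (vconv_scal _ v b (fun _ => -1) (-1)); auto. apply Un_cv_const. Qed.

Lemma vconv_scal_c n (u : nat -> vec n) a c : vconv u a -> vconv (fun k => vscal c (u k)) (vscal c a).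
Proof. intros. apply (vconv_scal _ u a (fun _ => c) c); auto. apply Un_cv_const. Qed.

Lemma dot_cv n (a b : nat -> vec n) x y : vconv a x -> vconv b y -> Un_cv (fun k => dot (a k) (b k)) (dot x y).
Proof.
  intros Ha Hb. apply vconv_iff in Ha. apply vconv_iff in Hb.
  assert (E : forall k, dot (a k) (b k) - dot x y = dot (vsub (a k) x) (vsub (b k) y) + dot (vsub (a k) x) y + dot x (vsub (b k) y)).
  { intro k. rewrite !dot_sub_l, !dot_sub_r. ring. }
  intros e He. pose proof (norm_ge0 _ x). pose proof (norm_ge0 _ y).
  set (e' := Rmin 1 (e / (3 * (norm x + norm y + 1)))).
  assert (He' : 0 < e') by (apply Rmin_pos; [lra|apply Rdiv_lt_0_compat; lra]).
  assert (e' <= 1) by apply Rmin_l.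
  assert (e' * (norm x + norm y + 1) <= e/3).
  { apply Rle_trans with (e / (3 * (norm x + norm y + 1)) * (norm x + norm y + 1)).
    apply Rmult_le_compat_r. lra. apply Rmin_r. right. field. lra. }
  destruct (Ha e' He') as [N1 HH1]. destruct (Hb e' He') as [N2 HH2]. exists (max N1 N2). intros k Hk.
  specialize (HH1 k ltac:(lia)). specialize (HH2 k ltac:(lia)). unfold R_dist in *. rewrite Rminus_0_r in *.
  rewrite Rabs_right in HH1, HH2 by (apply Rle_ge, norm_ge0).
  rewrite E. pose proof (cauchy_schwarz _ (vsub (a k) x) (vsub (b k) y)).
  pose proof (cauchy_schwarz _ (vsub (a k) x) y). pose proof (cauchy_schwarz _ x (vsub (b k) y)).
  pose proof (norm_ge0 _ (vsub (a k) x)). pose proof (norm_ge0 _ (vsub (b k) y)).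
  eapply Rle_lt_trans. apply Rabs_triang. eapply Rle_lt_trans. apply Rplus_le_compat_r. apply Rabs_triang.
  assert (norm (vsub (a k) x) * norm (vsub (b k) y) <= e' * e') by (apply Rmult_le_compat; lra).
  assert (norm (vsub (a k) x) * norm y <= e' * norm y) by (apply Rmult_le_compat_r; lra).
  assert (norm x * norm (vsub (b k) y) <= norm x * e') by (apply Rmult_le_compat_l; lra).
  assert (e' * e' <= e') by nra.
  nra.
Qed.

Lemma norm2_cv n (a : nat -> vec n) x : vconv a x -> Un_cv (fun k => norm (a k) ^ 2) (norm x ^ 2).
Proof. intro H. assert ((fun k => norm (a k) ^ 2) = (fun k => dot (a k) (a k))) as ->.
  apply functional_extensionality; intro; apply norm_sq. rewrite norm_sq. apply dot_cv; auto. Qed.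

Lemma norm_add_sq n (a b : vec n) : norm (vadd a b) ^ 2 = norm a ^ 2 + 2 * dot a b + norm b ^ 2.
Proof. rewrite !norm_sq, dot_add_l, !dot_add_r, (dot_comm _ b a). ring. Qed.

Lemma Un_cv_shift (u : nat -> R) l K : Un_cv u l -> Un_cv (fun k => u (K + k)%nat) l.
Proof. intros H e He. destruct (H e He) as [N HN]. exists N. intros k Hk. apply HN. lia. Qed.
Lemma vconv_shift n (u : nat -> vec n) l K : vconv u l -> vconv (fun k => u (K + k)%nat) l.
Proof. intros H e He. destruct (H e He) as [N HN]. exists N. intros k Hk. apply HN. lia. Qed.

Lemma gder_ev n (f : vec n -> xreal) xb w z (t : nat -> R) (wk zk : nat -> vec n) K :
  down_to_0 t -> vconv wk w -> vconv zk z ->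
  (forall k, (k >= K)%nat -> subdiff f (vadd xb (vscal (t k) (wk k))) (vscal (t k) (zk k))) ->
  gder f xb vzero w z.
Proof.
  intros [Ht1 Ht2] Hw Hz Hs. apply gder_iff.
  exists (fun k => t (K + k)%nat), (fun k => wk (K + k)%nat), (fun k => zk (K + k)%nat).
  split. split; auto. apply Un_cv_shift; auto.
  split. apply vconv_shift; auto. split. apply vconv_shift; auto. intro k. apply Hs. lia.
Qed.

Lemma limit_s a D N r : r >= 0 -> N >= 0 ->
  (forall s, 0 < s < 1 -> a <= s^2 * a + 2 * (1 - s) * D + r * (1 - s)^2 * N) -> a <= D.
Proof.
  intros Hr HN H. apply Rnot_lt_le. intro Hlt.
  destruct (Rle_dec (a + r * N) 0).
  - specialize (H (1/2) ltac:(lra)). nra.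
  - set (e := Rmin (1/2) ((a - D) / (a + r * N))).
    assert (0 < e) by (apply Rmin_pos; [lra| apply Rdiv_lt_0_compat; lra]).
    assert (e <= 1/2) by apply Rmin_l.
    assert (e * (a + r * N) <= a - D).
    { apply Rle_trans with ((a - D) / (a + r * N) * (a + r * N)). apply Rmult_le_compat_r. lra. apply Rmin_r.
      right. field. lra. }
    specialize (H (1 - e) ltac:(lra)).
    assert ((1 - (1 - e))^2 = e * e) by ring.
    assert (e * (2 * (a - D)) <= e * (e * (a + r * N))) by nra.
    nra.
Qed.

Lemma vsub_add_scal n (xb w : vec n) t : vsub (vadd xb (vscal t w)) xb = vscal t w.
Proof. apply functional_extensionality; intro; unfold vsub, vadd, vscal; ring. Qed.

Lemma sq_cont n (w : vec n) C : forall eta, eta > 0 -> exists d, d > 0 /\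
  forall w', norm (vsub w' w) < d -> Rabs (C * norm w' ^ 2 - C * norm w ^ 2) < eta.
Proof.
  intros eta He. pose proof (norm_ge0 _ w). pose proof (Rabs_pos C).
  set (d := Rmin 1 (eta / ((Rabs C + 1) * (2 * norm w + 1)))).
  assert (Hd : 0 < d). { unfold d. apply Rmin_pos. lra. apply Rdiv_lt_0_compat; [lra|]. nra. }
  exists d. split; auto. intros w' Hw'.
  pose proof (norm_sub_ge _ w' w). pose proof (norm_ge0 _ w').
  assert (d <= 1) by apply Rmin_l.
  assert (d * ((Rabs C + 1) * (2 * norm w + 1)) <= eta).
  { unfold d. eapply Rle_trans. apply Rmult_le_compat_r. nra. apply Rmin_r. right. field. nra. }
  set (a := norm w') in *. set (b := norm w) in *.
  replace (C * a ^ 2 - C * b ^ 2) with (C * ((a - b) * (a + b))) by ring.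
  rewrite Rabs_mult, Rabs_mult. 
  assert (Rabs (a - b) < d) by lra.
  assert (Rabs (a + b) <= 2 * b + 1).
  { rewrite Rabs_right by lra. apply Rabs_le_between' in H1 || idtac. 
    assert (a <= b + 1). { pose proof (Rle_abs (a - b)). lra. } lra. }
  pose proof (Rabs_pos (a-b)). pose proof (Rabs_pos (a+b)).
  apply Rle_lt_trans with ((Rabs C + 1) * (Rabs (a - b) * (2 * b + 1))).
  { apply Rle_trans with (Rabs C * (Rabs (a - b) * (2 * b + 1))).
    apply Rmult_le_compat_l; auto. apply Rmult_le_compat_l; auto. nra. }
  apply Rlt_le_trans with ((Rabs C + 1) * (d * (2 * b + 1))).
  { apply Rmult_lt_compat_l. lra. apply Rmult_lt_compat_r; lra. }
  nra.
Qed.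

Section Setting.
Variable n : nat.
Variable f : vec n -> xreal.
Variable xb : vec n.
Variable fxb : R.
Hypothesis Hfxb : f xb = Fin fxb.
Hypothesis Hnm : forall x, f x <> MInf.
Hypothesis Hlsc : lsc f.
Hypothesis H0sub : subdiff f xb vzero.
Variables r eps : R.
Hypothesis Hr : r > 0.
Hypothesis Heps : eps > 0.
Hypothesis Hprox : forall x u v fu, norm (vsub x xb) <= eps -> norm (vsub u xb) <= eps ->
  f u = Fin fu -> Rabs (fu - fxb) < eps -> subdiff f u v -> norm (vsub v vzero) <= eps ->
  xle (Fin (fu + dot v (vsub x u) - r / 2 * (norm (vsub x u)) ^ 2)) (f x).
Hypothesis Hsc : forall xk vk, vconv xk xb -> vconv vk vzero -> (forall k, subdiff f (xk k) (vk k)) ->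
  xconv (fun k => f (xk k)) (Fin fxb).
Hypothesis Htw : forall (w : vec n) tau, down_to_0 tau -> exists wk, vconv wk w /\
  forall a, second_subderiv f xb vzero w a -> xconv (fun k => quot2 f xb vzero fxb (tau k) (wk k)) a.

Definition Q tau w := quot2 f xb vzero fxb tau w.

Lemma le_div g A B : B > 0 -> g * B <= A -> g <= A / B.
Proof. intros HB H. apply (Rmult_le_reg_r B); auto. unfold Rdiv. rewrite Rmult_assoc, Rinv_l by lra. lra. Qed.
Lemma div_le g A B : B > 0 -> A <= g * B -> A / B <= g.
Proof. intros HB H. apply (Rmult_le_reg_r B); auto. unfold Rdiv. rewrite Rmult_assoc, Rinv_l by lra. lra. Qed.

Lemma Q_ge tau w g : tau > 0 -> xle (Fin (fxb + tau^2/2 * g)) (f (vadd xb (vscal tau w))) -> xle (Fin g) (Q tau w).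
Proof. intros Ht H. unfold Q, quot2. rewrite dot_zero_l. destruct (f (vadd xb (vscal tau w))); simpl in *; auto.
  apply le_div. nra. nra. Qed.

Lemma Q_le tau w g : tau > 0 -> xle (f (vadd xb (vscal tau w))) (Fin (fxb + tau^2/2 * g)) -> xle (Q tau w) (Fin g).
Proof. intros Ht H. unfold Q, quot2. rewrite dot_zero_l. destruct (f (vadd xb (vscal tau w))); simpl in *; auto.
  apply div_le. nra. nra. Qed.

Lemma Q_fin tau w y : tau > 0 -> f (vadd xb (vscal tau w)) = Fin y -> Q tau w = Fin ((y - fxb) / (tau^2/2)).
Proof. intros Ht H. unfold Q, quot2. rewrite H, dot_zero_l. f_equal. field. lra. Qed.

Definition Iset d w q := exists tau w', 0 < tau < d /\ norm (vsub w' w) < d /\ q = Q tau w'.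
Definition Bset w b := exists d, d > 0 /\ is_inf (Iset d w) b.

Lemma SS_iff w a : second_subderiv f xb vzero w a <-> is_sup (Bset w) a.
Proof. split.
  - intros [fx [E H]]. rewrite Hfxb in E. injection E as <-. exact H.
  - intro H. exists fxb. split; auto. Qed.

Definition H w := proj1_sig (constructive_indefinite_description _ (sup_exists (Bset w))).
Lemma H_spec w : is_sup (Bset w) (H w).
Proof. unfold H. destruct (constructive_indefinite_description _ _). auto. Qed.

Lemma HLB w (g : vec n -> R) :
  (exists d, d > 0 /\ forall tau w', 0 < tau < d -> norm (vsub w' w) < d -> xle (Fin (g w')) (Q tau w')) ->
  (forall eta, eta > 0 -> exists d, d > 0 /\ forall w', norm (vsub w' w) < d -> g w - eta <= g w') ->
  xle (Fin (g w)) (H w).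
Proof.
  intros [d1 [Hd1 H1]] Hc. apply xle_eps_down. intros eta Heta.
  destruct (Hc eta Heta) as [d2 [Hd2 H2]].
  set (d := Rmin d1 d2). assert (0 < d) by (apply Rmin_pos; auto).
  destruct (inf_exists (Iset d w)) as [b Hb].
  apply xle_trans with b.
  - apply Hb. intros q [tau [w' [Ht [Hw E]]]]. subst q.
    assert (d <= d1) by apply Rmin_l. assert (d <= d2) by apply Rmin_r.
    apply xle_trans with (Fin (g w')). simpl. apply H2. lra. apply H1; lra.
  - apply (proj1 (H_spec w)). exists d. auto.
Qed.

Lemma H4 w (tau : nat -> R) (wk : nat -> vec n) c :
  (forall k, tau k > 0) -> Un_cv tau 0 -> vconv wk w ->
  (forall eta, eta > 0 -> exists N, forall k, (k >= N)%nat -> xle (Q (tau k) (wk k)) (Fin (c + eta))) ->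
  xle (H w) (Fin c).
Proof.
  intros Hp Ht Hw Hq. apply (proj2 (H_spec w)). intros b [d [Hd Hb]].
  apply xle_eps_up. intros eta Heta.
  destruct (Hq eta Heta) as [N1 HN1]. destruct (Ht d Hd) as [N2 HN2]. destruct (Hw d Hd) as [N3 HN3].
  set (k := max N1 (max N2 N3)).
  apply xle_trans with (Q (tau k) (wk k)).
  - apply Hb. exists (tau k), (wk k). split; [|split; auto].
    specialize (HN2 k ltac:(lia)). unfold R_dist in HN2. rewrite Rminus_0_r in HN2.
    specialize (Hp k). rewrite Rabs_right in HN2 by lra. lra. apply HN3. lia.
  - apply HN1. lia.
Qed.

Lemma H1 w c : (forall d, d > 0 -> exists w', norm (vsub w' w) < d /\ xle (H w') (Fin (c + d))) ->
  xle (H w) (Fin c).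
Proof.
  intros Hc. apply (proj2 (H_spec w)). intros b [d [Hd Hb]].
  apply xle_eps_up. intros eta Heta.
  set (d' := Rmin (d/2) eta). assert (0 < d') by (apply Rmin_pos; lra).
  destruct (Hc d' H0) as [w' [Hw' Hle]].
  assert (d' <= d/2) by apply Rmin_l. assert (d' <= eta) by apply Rmin_r.
  destruct (inf_exists (Iset (d/2) w')) as [b' Hb'].
  apply xle_trans with b'.
  - apply Hb'. intros q [tau [w'' [Ht [Hw E]]]]. apply Hb. exists tau, w''. split; [lra|split; auto].
    pose proof (norm_sub_tri _ w'' w' w). lra.
  - apply xle_trans with (H w'). apply (proj1 (H_spec w')). exists (d/2). split; auto. lra.
    apply xle_trans with (Fin (c + d')); auto. simpl. lra.
Qed.

Lemma H5 w tau : down_to_0 tau -> exists wk, vconv wk w /\ xconv (fun k => Q (tau k) (wk k)) (H w).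
Proof. intros Ht. destruct (Htw w tau Ht) as [wk [Hw Hc]]. exists wk. split; auto.
  apply Hc. apply SS_iff. apply H_spec. Qed.

Lemma Hlow w : xle (Fin (- r * norm w ^ 2)) (H w).
Proof.
  apply (HLB w (fun w' => - r * norm w' ^ 2)).
  - pose proof (norm_ge0 _ w).
    exists (Rmin 1 (eps / (norm w + 1))). split. apply Rmin_pos. lra. apply Rdiv_lt_0_compat; lra.
    intros tau w' Ht Hw'. assert (Rmin 1 (eps / (norm w + 1)) <= 1) by apply Rmin_l.
    assert (Rmin 1 (eps / (norm w + 1)) <= eps / (norm w + 1)) by apply Rmin_r.
    pose proof (norm_sub_tri _ w' w vzero) as Htri. rewrite !norm_sub0 in Htri.
    assert (tau * norm w' <= eps).
    { apply Rle_trans with (eps / (norm w + 1) * (norm w + 1)). pose proof (norm_ge0 _ w').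
      apply Rmult_le_compat; lra. right. field. lra. }
    apply Q_ge; [lra|].
    destruct (f xb) eqn:E; [discriminate|injection Hfxb as ->|discriminate].
    assert (HH := Hprox (vadd xb (vscal tau w')) xb vzero fxb).
    rewrite vsub_add_scal, norm_scal, Rabs_right in HH by lra.
    replace (vsub xb xb) with (@vzero n) in HH by (apply functional_extensionality; intro; unfold vsub, vzero; ring).
    replace (vsub vzero vzero) with (@vzero n) in HH by (apply functional_extensionality; intro; unfold vsub, vzero; ring).
    rewrite norm_zero, dot_zero_l, Rminus_diag, Rabs_R0 in HH.
    eapply xle_trans; [|apply HH; auto; lra]. simpl. apply Req_le. field.
  - intros eta He. destruct (sq_cont _ w (- r) eta He) as [d [Hd Hc]]. exists d. split; auto.
    intros w' Hw'. specialize (Hc w' Hw'). apply Rabs_def2 in Hc. lra.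
Qed.

Lemma H_notMInf w : H w <> MInf.
Proof. intro E. pose proof (Hlow w). rewrite E in H0. simpl in H0. auto. Qed.

Lemma Q_scale tau s w : tau > 0 -> s > 0 -> Q tau (vscal s w) = xscal (s^2) (Q (s * tau) w).
Proof.
  intros Ht Hs. unfold Q, quot2. rewrite !dot_zero_l.
  replace (vadd xb (vscal tau (vscal s w))) with (vadd xb (vscal (s * tau) w))
    by (apply functional_extensionality; intro; unfold vadd, vscal; ring).
  destruct (f (vadd xb (vscal (s * tau) w))); simpl; auto. f_equal. field. lra.
Qed.

Definition tk (k : nat) := / INR (S k).
Lemma tk_pos k : tk k > 0.
Proof. unfold tk. apply Rinv_0_lt_compat, lt_0_INR. lia. Qed.
Lemma tk_cv : Un_cv tk 0.
Proof. intros e He. destruct (archimed_cor1 e He) as [N [HN1 HN2]]. exists N. intros k Hk.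
  unfold R_dist, tk. rewrite Rminus_0_r, Rabs_right. eapply Rle_lt_trans; [|apply HN1].
  apply Rinv_le_contravar. apply lt_0_INR; lia. apply le_INR; lia.
  apply Rle_ge, Rlt_le, Rinv_0_lt_compat, lt_0_INR; lia. Qed.

Lemma down_scal c (t : nat -> R) : c > 0 -> down_to_0 t -> down_to_0 (fun k => c * t k).
Proof. intros Hc [H1 H2]. split. intro k. specialize (H1 k). nra.
  intros e He. destruct (H2 (e / c)) as [N HN]. apply Rdiv_lt_0_compat; lra. exists N. intros k Hk.
  specialize (HN k Hk). unfold R_dist in *. rewrite Rminus_0_r in *.
  rewrite Rabs_mult, Rabs_right by lra. apply (Rmult_lt_compat_l c) in HN; auto.
  replace (c * (e / c)) with e in HN by (field; lra). auto. Qed.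

Lemma down_tk : down_to_0 tk.
Proof. split. apply tk_pos. apply tk_cv. Qed.

Lemma Hhom w s a : s > 0 -> H w = Fin a -> xle (H (vscal s w)) (Fin (s^2 * a)).
Proof.
  intros Hs Ea.
  destruct (H5 w (fun k => s * tk k)) as [wk [Hw Hc]]. apply down_scal; auto. apply down_tk.
  apply (H4 _ tk (fun k => vscal s (wk k))). apply tk_pos. apply tk_cv.
  apply (vconv_scal _ wk w (fun _ => s) s); auto. intros e He. exists O. intros. unfold R_dist. rewrite Rminus_diag, Rabs_R0. lra.
  intros eta Heta. rewrite Ea in Hc. simpl in Hc.
  destruct (Hc (eta / s^2)) as [N HN]. apply Rdiv_lt_0_compat; nra.
  exists N. intros k Hk. destruct (HN k Hk) as [q [Eq Hq]].
  rewrite Q_scale; [|apply tk_pos|auto]. rewrite Eq. simpl.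
  apply Rabs_def2 in Hq. destruct Hq as [Hq1 Hq2].
  assert (s^2 * (q - a) <= s^2 * (eta / s^2)) by (apply Rmult_le_compat_l; nra).
  replace (s^2 * (eta / s^2)) with eta in H0 by (field; nra). nra.
Qed.


Ltac vext := apply functional_extensionality; intro; unfold vsub, vadd, vscal, vzero; ring.

Lemma Q_inv tau w p : tau > 0 -> Q tau w = Fin p -> f (vadd xb (vscal tau w)) = Fin (fxb + tau^2/2 * p).
Proof. intros Ht. unfold Q, quot2. rewrite dot_zero_l. destruct (f (vadd xb (vscal tau w))); intro E; inversion E.
  f_equal. field. lra. Qed.

Lemma xk_conv (t : nat -> R) (wk : nat -> vec n) w : Un_cv t 0 -> vconv wk w ->
  vconv (fun k => vadd xb (vscal (t k) (wk k))) xb.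
Proof. intros Ht Hw. assert (E : vadd xb (vscal 0 w) = xb) by vext.
  pose proof (vconv_add _ (fun _ => xb) (fun k => vscal (t k) (wk k)) xb (vscal 0 w) (vconv_const _ xb)
    (vconv_scal _ wk w t 0 Hw Ht)) as HH. rewrite E in HH. exact HH. Qed.

Lemma vk_conv (t : nat -> R) (zk : nat -> vec n) z : Un_cv t 0 -> vconv zk z ->
  vconv (fun k => vscal (t k) (zk k)) vzero.
Proof. intros Ht Hz. assert (E : vscal 0 z = vzero) by vext.
  pose proof (vconv_scal _ zk z t 0 Hz Ht) as HH. rewrite E in HH. exact HH. Qed.

Lemma seq_facts (t : nat -> R) (wk zk : nat -> vec n) w z : down_to_0 t -> vconv wk w -> vconv zk z ->
  (forall k, subdiff f (vadd xb (vscal (t k) (wk k))) (vscal (t k) (zk k))) ->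
  forall eta, eta > 0 -> exists N, forall k, (k >= N)%nat -> exists y, f (vadd xb (vscal (t k) (wk k))) = Fin y /\
    Rabs (y - fxb) < eta /\ norm (vsub (vadd xb (vscal (t k) (wk k))) xb) <= eta /\
    norm (vsub (vscal (t k) (zk k)) vzero) <= eta.
Proof.
  intros [Ht1 Ht2] Hw Hz Hs eta He.
  pose proof (Hsc _ _ (xk_conv t wk w Ht2 Hw) (vk_conv t zk z Ht2 Hz) Hs) as Hc. simpl in Hc.
  destruct (Hc eta He) as [N1 HN1]. destruct (xk_conv t wk w Ht2 Hw eta He) as [N2 HN2].
  destruct (vk_conv t zk z Ht2 Hz eta He) as [N3 HN3].
  exists (max N1 (max N2 N3)). intros k Hk. destruct (HN1 k ltac:(lia)) as [y [Ey Hy]]. exists y.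
  split; auto. split; auto. split; [apply Rlt_le, HN2; lia| apply Rlt_le, HN3; lia].
Qed.

Lemma B1 w z : gder f xb vzero w z -> exists a, H w = Fin a /\ a <= dot z w.
Proof.
  intro Hg. apply gder_iff in Hg. destruct Hg as [t [wk [zk [Hdt [Hw [Hz Hs]]]]]].
  pose proof Hdt as [Ht1 Ht2].
  pose proof (seq_facts t wk zk w z Hdt Hw Hz Hs) as SF.
  assert (Step1 : xle (H w) (Fin (2 * dot z w + r * norm w ^ 2))).
  { apply (H4 w t wk); auto. intros eta He.
    assert (Hc : Un_cv (fun k => 2 * dot (zk k) (wk k) + r * norm (wk k) ^ 2) (2 * dot z w + r * norm w ^ 2)).
    { apply CV_plus. apply CV_mult. apply Un_cv_const. apply dot_cv; auto.
      apply CV_mult. apply Un_cv_const. apply norm2_cv; auto. }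
    destruct (Hc eta He) as [N1 HN1]. destruct (SF eps Heps) as [N2 HN2].
    exists (max N1 N2). intros k Hk. destruct (HN2 k ltac:(lia)) as [y [Ey [Hy1 [Hy2 Hy3]]]].
    specialize (HN1 k ltac:(lia)). unfold R_dist in HN1. apply Rabs_def2 in HN1.
    assert (HP := Hprox xb _ _ y ltac:(replace (vsub xb xb) with (@vzero n) by vext; rewrite norm_zero; lra) Hy2 Ey Hy1 (Hs k) Hy3).
    rewrite Hfxb in HP. simpl in HP.
    replace (vsub xb (vadd xb (vscal (t k) (wk k)))) with (vscal (t k) (vscal (-1) (wk k))) in HP by vext.
    rewrite dot_scal_l, dot_scal_r, dot_scal_r, norm_scal, norm_scal in HP. rewrite (Rabs_left1 (-1)) in HP by lra. rewrite (Rabs_right (t k)) in HP by (specialize (Ht1 k); lra).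
    rewrite (Q_fin _ _ y (Ht1 k) Ey). simpl. specialize (Ht1 k). apply div_le. nra.
    nra. }
  destruct (H w) eqn:Ea.
  - exfalso. apply (H_notMInf w). auto.
  - exists r0. split; auto.
    apply (limit_s r0 (dot z w) (norm w ^ 2) r); [lra| pose proof (norm_ge0 _ w); nra|].
    intros s Hs01.
    destruct (H5 w (fun k => s * t k)) as [w2 [Hw2 Hq2]]. apply down_scal; [lra|auto].
    rewrite Ea in Hq2. simpl in Hq2.
    assert (Hb : Un_cv (fun k => - 2 * dot (zk k) (vsub (vscal s (w2 k)) (wk k)) + r * norm (vsub (vscal s (w2 k)) (wk k)) ^ 2)
                   (- 2 * dot z (vsub (vscal s w) w) + r * norm (vsub (vscal s w) w) ^ 2)).
    { apply CV_plus. apply CV_mult. apply Un_cv_const. apply dot_cv; auto.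
      apply vconv_sub_v; auto. apply vconv_scal_c; auto.
      apply CV_mult. apply Un_cv_const. apply norm2_cv. apply vconv_sub_v; auto. apply vconv_scal_c; auto. }
    replace (vsub (vscal s w) w) with (vscal (s - 1) w) in Hb by vext.
    rewrite dot_scal_r, norm_scal in Hb.
    assert (Hsb : s ^ 2 * r0 + (- 2 * ((s - 1) * dot z w) + r * (Rabs (s - 1) * norm w) ^ 2) =
                  s ^ 2 * r0 + 2 * (1 - s) * dot z w + r * (1 - s) ^ 2 * norm w ^ 2).
    { rewrite Rabs_left by lra. ring. }
    rewrite <- Hsb.
    cut (xle (H w) (Fin (s ^ 2 * r0 + (- 2 * ((s - 1) * dot z w) + r * (Rabs (s - 1) * norm w) ^ 2)))).
    { rewrite Ea. simpl. auto. }
    apply (H4 w t wk); auto. intros eta He.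
    destruct (Hq2 (eta/2)) as [N1 HN1]; [lra|]. destruct (Hb (eta/2)) as [N2 HN2]; [lra|].
    destruct (SF eps Heps) as [N3 HN3].
    assert (Hx2 : vconv (fun k => vscal (s * t k) (w2 k)) vzero).
    { apply (vk_conv _ _ w). apply down_scal; auto. lra. auto. }
    destruct (Hx2 eps Heps) as [N4 HN4].
    exists (max (max N1 N2) (max N3 N4)). intros k Hk.
    destruct (HN1 k ltac:(lia)) as [p [Ep Hp]]. specialize (HN2 k ltac:(lia)). unfold R_dist in HN2.
    destruct (HN3 k ltac:(lia)) as [y [Ey [Hy1 [Hy2 Hy3]]]].
    specialize (HN4 k ltac:(lia)). rewrite norm_sub0 in HN4.
    specialize (Ht1 k).
    assert (s * t k > 0) as Hst. { destruct Hs01. apply Rmult_lt_0_compat; lra. }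
    assert (Ef := Q_inv _ _ p Hst Ep).
    assert (HP := Hprox (vadd xb (vscal (s * t k) (w2 k))) _ _ y ltac:(rewrite vsub_add_scal; lra) Hy2 Ey Hy1 (Hs k) Hy3).
    rewrite Ef in HP. simpl in HP.
    replace (vsub (vadd xb (vscal (s * t k) (w2 k))) (vadd xb (vscal (t k) (wk k))))
      with (vscal (t k) (vsub (vscal s (w2 k)) (wk k))) in HP by vext.
    rewrite dot_scal_l, dot_scal_r, norm_scal, Rabs_right in HP by lra.
    rewrite (Q_fin _ _ y Ht1 Ey). simpl. apply Rabs_def2 in Hp. apply Rabs_def2 in HN2.
    apply div_le. nra.
    assert (s^2 * p <= s^2 * r0 + eta/2).
    { destruct Hs01. assert (0 <= s^2 <= 1) by (split; nra). destruct Hp.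
      assert (s^2 * (p - r0) <= s^2 * (eta/2)) by (apply Rmult_le_compat_l; lra). nra. }
    set (D := dot (zk k) (vsub (vscal s (w2 k)) (wk k))) in *.
    set (NN := norm (vsub (vscal s (w2 k)) (wk k))) in *.
    assert (y - fxb <= t k ^ 2 / 2 * (s^2 * p + (-2 * D + r * NN ^ 2))) by nra.
    assert (t k ^ 2 / 2 > 0) by nra.
    nra.
  - exfalso. simpl in Step1. auto.
Qed.

Lemma not_xle_fin c e : ~ xle (Fin c) e -> e <> MInf -> exists y, e = Fin y /\ y < c.
Proof. intros H1 H2. destruct e. contradiction. exists r0. split; auto. simpl in H1. lra.
  exfalso. apply H1. simpl. auto. Qed.

Lemma unit_scal (v : vec n) : norm v > 0 -> norm (vscal (/ norm v) v) = 1.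
Proof. intro Hv. rewrite norm_scal, Rabs_right. field. lra. apply Rle_ge, Rlt_le, Rinv_0_lt_compat; auto. Qed.

Lemma K1 (kap : nat -> R) ka : Un_cv kap ka ->
  (forall k, exists x, norm (vsub x xb) < tk k /\ ~ xle (Fin (fxb + kap k / 2 * norm (vsub x xb) ^ 2)) (f x)) ->
  exists w, norm w = 1 /\ xle (H w) (Fin ka).
Proof.
  intros Hk Hx. destruct (choice _ Hx) as [xs Hxs].
  assert (Hy : forall k, exists y, f (xs k) = Fin y /\ y < fxb + kap k / 2 * norm (vsub (xs k) xb) ^ 2).
  { intro k. apply not_xle_fin. apply Hxs. apply Hnm. }
  destruct (choice _ Hy) as [y Hy'].
  set (d := fun k => norm (vsub (xs k) xb)).
  assert (Hd : forall k, d k > 0).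
  { intro k. destruct (norm_ge0 _ (vsub (xs k) xb)); auto. exfalso.
    apply eq_sym, norm_eq0, vsub_eq0 in H0. destruct (Hy' k) as [E1 E2].
    rewrite H0, Hfxb in E1. injection E1 as E1'. rewrite H0, <- E1' in E2.
    replace (vsub xb xb) with (@vzero n) in E2 by vext. rewrite norm_zero in E2. lra. }
  set (u := fun k => vscal (/ d k) (vsub (xs k) xb)).
  assert (Hu : forall k, norm (u k) = 1) by (intro k; apply unit_scal, Hd).
  destruct (BWn n u 1) as [phi [w [Hphi Hcv]]]. intro k; rewrite Hu; lra.
  exists w. split.
  { apply (UL_sequence (fun j => norm (u (phi j)))). apply vconv_norm; auto.
    assert ((fun j => norm (u (phi j))) = fun _ => 1) as -> by (apply functional_extensionality; intro; apply Hu).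
    apply Un_cv_const. }
  assert (Hd0 : Un_cv d 0).
  { intros e He. destruct (tk_cv e He) as [N HN]. exists N. intros k Hk2. specialize (HN k Hk2).
    unfold R_dist in HN |- *. rewrite Rminus_0_r in HN |- *.
    rewrite (Rabs_right (tk k)) in HN by (apply Rle_ge, Rlt_le, tk_pos).
    rewrite (Rabs_right (d k)) by (apply Rle_ge, Rlt_le, Hd).
    destruct (Hxs k) as [Hl _]. unfold d. lra. }
  apply (H4 w (fun j => d (phi j)) (fun j => u (phi j))).
  intro; apply Hd. apply Un_cv_sub; auto. exact Hcv.
  { intros eta He. destruct (Un_cv_sub _ _ _ Hk Hphi eta He) as [N HN]. exists N. intros j Hj.
    specialize (HN j Hj). unfold R_dist in HN. apply Rabs_def2 in HN.
    set (k := phi j) in *.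
    assert (E : vadd xb (vscal (d k) (u k)) = xs k).
    { apply functional_extensionality; intro i. unfold u, vadd, vscal, vsub. field. pose proof (Hd k). lra. }
    destruct (Hy' k) as [E1 E2]. fold d in E2.
    rewrite (Q_fin _ _ (y k) (Hd k)); [|rewrite E; auto]. simpl.
    change (norm (vsub (xs k) xb)) with (d k) in E2. pose proof (Hd k).
    assert (kap k * d k^2 <= (ka + eta) * d k^2) by (apply Rmult_le_compat_r; nra).
    apply div_le. nra. nra. }
Qed.

Lemma K2 w1 c : norm w1 = 1 -> xle (H w1) (Fin c) ->
  exists w0 m, norm w0 = 1 /\ m <= c /\ H w0 = Fin m /\ forall w, xle (Fin (m * norm w ^ 2)) (H w).
Proof.
  intros Hw1 Hc.
  destruct (inf_exists (fun s => exists w, norm w = 1 /\ s = H w)) as [mx [Hm1 Hm2]].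
  assert (Hlb : xle (Fin (- r)) mx).
  { apply Hm2. intros s [w [Hw ->]]. pose proof (Hlow w). rewrite Hw in H0. eapply xle_trans; [|exact H0].
    simpl. lra. }
  assert (Hub : xle mx (Fin c)). { apply xle_trans with (H w1); auto. apply Hm1. eauto. }
  destruct mx as [|m|]; simpl in Hlb, Hub; try tauto.
  assert (Hseq : forall j : nat, exists w, norm w = 1 /\ xle (H w) (Fin (m + tk j))).
  { intro j. apply NNPP. intro Hn.
    assert (xle (Fin (m + tk j)) (Fin m)) as Hc0.
    { apply Hm2. intros s [w [Hw ->]]. destruct (xle_total (H w) (Fin (m + tk j))); auto.
      exfalso; eauto. }
    change (m + tk j <= m) in Hc0. pose proof (tk_pos j). lra. }
  destruct (choice _ Hseq) as [wj Hwj].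
  destruct (BWn n wj 1) as [phi [w0 [Hphi Hcv]]]. { intro k. destruct (Hwj k) as [-> _]. lra. }
  assert (Hw0 : norm w0 = 1).
  { apply (UL_sequence (fun j => norm (wj (phi j)))). apply vconv_norm; auto.
    assert ((fun j => norm (wj (phi j))) = fun _ => 1) as -> by (apply functional_extensionality; intro; apply Hwj).
    apply Un_cv_const. }
  assert (Hm0 : H w0 = Fin m).
  { apply xle_antisym.
    - apply H1. intros dd Hdd. destruct (Hcv dd Hdd) as [N1 HN1].
      destruct (tk_cv dd Hdd) as [N2 HN2].
      set (j := max N1 N2). exists (wj (phi j)). split. apply HN1. lia.
      destruct (Hwj (phi j)) as [_ Hle]. eapply xle_trans; [exact Hle|]. simpl.
      specialize (HN2 (phi j)). unfold R_dist in HN2. rewrite Rminus_0_r, Rabs_right in HN2.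
      assert (phi j >= N2)%nat by (pose proof (subseq_ge _ Hphi j); lia). specialize (HN2 H0). lra.
      apply Rle_ge, Rlt_le, tk_pos.
    - apply Hm1. eauto. }
  exists w0, m. split; auto. split; auto. split; auto.
  intro w. destruct (Req_dec (norm w) 0) as [Hn0|Hn0].
  - rewrite Hn0. pose proof (Hlow w). rewrite Hn0 in H0. eapply xle_trans; [|exact H0]. simpl. lra.
  - assert (Hpos : norm w > 0) by (pose proof (norm_ge0 _ w); lra).
    assert (Hu : xle (Fin m) (H (vscal (/ norm w) w))). { apply Hm1. exists (vscal (/ norm w) w). split; auto. apply unit_scal; auto. }
    destruct (H w) eqn:Ew.
    + exfalso. apply (H_notMInf w); auto.
    + pose proof (Hhom w (/ norm w) r0 ltac:(apply Rinv_0_lt_compat; auto) Ew).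
      pose proof (xle_trans _ _ _ Hu H0). simpl in H2. simpl.
      assert (m * norm w ^ 2 <= (/ norm w) ^ 2 * r0 * norm w ^ 2) by (apply Rmult_le_compat_r; nra).
      replace ((/ norm w) ^ 2 * r0 * norm w ^ 2) with r0 in H3 by (field; lra). auto.
    + simpl; auto.
Qed.

Lemma xconv_sub_fin (q : nat -> xreal) a phi : xconv q (Fin a) -> subseq phi -> xconv (fun j => q (phi j)) (Fin a).
Proof. intros Hq Hp e He. destruct (Hq e He) as [N HN]. exists N. intros j Hj. apply HN.
  pose proof (subseq_ge _ Hp j). lia. Qed.

Lemma Un_cv_ge (u : nat -> R) l e : Un_cv u l -> (forall j, e <= u j) -> e <= l.
Proof. intros Hu He. apply Rnot_lt_le. intro Hlt. destruct (Hu (e - l)) as [N HN]. lra.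
  specialize (HN N ltac:(lia)). specialize (He N). unfold R_dist in HN. apply Rabs_def2 in HN. lra. Qed.

Lemma cont_sq (p x : vec n) C : forall eta, eta > 0 -> exists d, d > 0 /\
  forall y, norm (vsub y x) < d -> Rabs (C * norm (vsub y p) ^ 2 - C * norm (vsub x p) ^ 2) < eta.
Proof. intros eta He. destruct (sq_cont _ (vsub x p) C eta He) as [d [Hd Hc]]. exists d. split; auto.
  intros y Hy. apply Hc. replace (vsub (vsub y p) (vsub x p)) with (vsub y x) by vext. auto. Qed.

Lemma norm_le_R (w w0 : vec n) e : norm (vsub w w0) < e -> norm w <= norm w0 + e.
Proof. intro H. pose proof (norm_sub_tri _ w w0 vzero) as T. rewrite !norm_sub0 in T. lra. Qed.

Lemma K3 w0 m : H w0 = Fin (m * norm w0 ^ 2) -> (forall w, xle (Fin (m * norm w ^ 2)) (H w)) ->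
  gder f xb vzero w0 (vscal m w0).
Proof.
  intros Hw0 Hmin.
  set (R := norm w0 + 1). assert (HR : R > 0) by (unfold R; pose proof (norm_ge0 _ w0); lra).
  set (lam := Rabs m + 1). assert (Hlam : lam > m) by (unfold lam; pose proof (Rle_abs m); lra).
  assert (Hlam0 : lam > 0) by (unfold lam; pose proof (Rabs_pos m); lra).
  set (delta0 := eps / (2 * R)). assert (Hd0 : delta0 > 0) by (unfold delta0; apply Rdiv_lt_0_compat; lra).
  set (t := fun k => delta0 * tk k).
  assert (Hdt : down_to_0 t) by (apply down_scal; auto; apply down_tk).
  assert (Htp : forall k, t k > 0) by apply Hdt.
  assert (HtR : forall k, t k * R <= eps / 2).
  { intro k. unfold t, delta0. assert (tk k <= 1).
    { unfold tk. rewrite <- Rinv_1. apply Rinv_le_contravar. lra. rewrite S_INR. pose proof (pos_INR k). lra. }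
    pose proof (tk_pos k). apply Rle_trans with (eps / (2 * R) * 1 * R). apply Rmult_le_compat_r. lra.
    apply Rmult_le_compat_l. apply Rlt_le; auto. auto. right. field. lra. }
  set (p := fun k => vadd xb (vscal (t k) w0)).
  set (c := fun k x => - m / 2 * norm (vsub x xb) ^ 2 + lam / 2 * norm (vsub x (p k)) ^ 2).
  assert (Hex : forall k, exists xs, norm (vsub xs xb) <= t k * R /\ forall x, norm (vsub x xb) <= t k * R ->
             xle (xaddr (f xs) (c k xs)) (xaddr (f x) (c k x))).
  { intro k. apply (evt n f (c k) xb (t k * R) (fxb - (r / 2 + Rabs m / 2) * (t k * R) ^ 2)); auto.
    - intros x eta He. destruct (cont_sq xb x (- m / 2) (eta/2)) as [d1 [Hd1 H1']]; [lra|].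
      destruct (cont_sq (p k) x (lam / 2) (eta/2)) as [d2 [Hd2 H2']]; [lra|].
      exists (Rmin d1 d2). split. apply Rmin_pos; auto. intros y Hy.
      assert (Rmin d1 d2 <= d1) by apply Rmin_l. assert (Rmin d1 d2 <= d2) by apply Rmin_r.
      specialize (H1' y ltac:(lra)). specialize (H2' y ltac:(lra)). unfold c.
      apply Rabs_def2 in H1'. apply Rabs_def2 in H2'. apply Rabs_def1; lra.
    - specialize (Htp k). nra.
    - intros x Hx. specialize (HtR k). specialize (Htp k).
      assert (HP := Hprox x xb vzero fxb ltac:(lra) ltac:(replace (vsub xb xb) with (@vzero n) by vext; rewrite norm_zero; lra)
        Hfxb ltac:(rewrite Rminus_diag, Rabs_R0; lra) H0sub ltac:(rewrite norm_sub0, norm_zero; lra)).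
      rewrite dot_zero_l in HP. unfold c. pose proof (norm_ge0 _ (vsub x xb)). pose proof (norm_ge0 _ (vsub x (p k))).
      assert (norm (vsub x xb) ^ 2 <= (t k * R) ^ 2) by nra.
      pose proof (Rle_abs m). pose proof (Rle_abs (-m)) as Hm'. rewrite Rabs_Ropp in Hm'.
      assert (- m / 2 * norm (vsub x xb) ^ 2 >= - (Rabs m / 2) * (t k * R) ^ 2) by nra.
      destruct (f x); simpl in *; auto. nra.
    - exists xb. split. replace (vsub xb xb) with (@vzero n) by vext. rewrite norm_zero. specialize (Htp k). nra.
      rewrite Hfxb. discriminate. }
  destruct (choice _ Hex) as [xm Hxm].
  set (wm := fun k => vscal (/ t k) (vsub (xm k) xb)).
  assert (Exm : forall k, vadd xb (vscal (t k) (wm k)) = xm k).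
  { intro k. apply functional_extensionality; intro i. unfold wm, vadd, vscal, vsub. field. specialize (Htp k). lra. }
  assert (HwmR : forall k, norm (wm k) <= R).
  { intro k. unfold wm. rewrite norm_scal, Rabs_right. destruct (Hxm k) as [Hb _]. specialize (Htp k).
    apply Rle_trans with (/ t k * (t k * R)). apply Rmult_le_compat_l. apply Rlt_le, Rinv_0_lt_compat; auto. auto.
    right. field. lra. apply Rle_ge, Rlt_le, Rinv_0_lt_compat, Htp. }
  assert (Ec : forall k w, c k (vadd xb (vscal (t k) w)) = t k ^ 2 * (- m / 2 * norm w ^ 2 + lam / 2 * norm (vsub w w0) ^ 2)).
  { intros k w. unfold c, p. rewrite vsub_add_scal.
    replace (vsub (vadd xb (vscal (t k) w)) (vadd xb (vscal (t k) w0))) with (vscal (t k) (vsub w w0)) by vext.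
    rewrite !norm_scal, Rabs_right by (apply Rle_ge, Rlt_le, Htp). ring. }
  destruct (H5 w0 t Hdt) as [w2 [Hw2 Hq2]]. rewrite Hw0 in Hq2.
  assert (Hconv : vconv wm w0).
  { intros e He. apply NNPP. intro Hn.
    assert (Hinf : forall N, exists k, (k >= N)%nat /\ e <= norm (vsub (wm k) w0)).
    { intro N. apply NNPP. intro Hn2. apply Hn. exists N. intros k Hk. apply Rnot_le_lt. intro Hle. apply Hn2. eauto. }
    destruct (choice _ Hinf) as [g Hg].
    set (psi := fix psi j := match j with O => g O | S j' => g (S (psi j')) end).
    assert (Hpsi : subseq psi). { intro j. simpl. destruct (Hg (S (psi j))). lia. }
    assert (Hpsi2 : forall j, e <= norm (vsub (wm (psi j)) w0)). { intro j; destruct j; simpl; apply Hg. }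
    destruct (BWn n (fun j => wm (psi j)) R) as [phi [ws [Hphi Hcw]]]. intro; apply HwmR.
    set (kap := fun j => psi (phi j)).
    assert (Hkap : subseq kap) by exact (subseq_comp psi phi Hpsi Hphi).
    assert (Hws : e <= norm (vsub ws w0)).
    { apply (Un_cv_ge (fun j => norm (vsub (wm (kap j)) w0))).
      pose proof (vconv_norm _ _ _ (vconv_sub_v _ _ (fun _ => w0) _ _ Hcw (vconv_const _ w0))). exact H0.
      intro j. apply Hpsi2. }
    assert (HH : xle (H ws) (Fin (m * norm ws ^ 2 - lam * norm (vsub ws w0) ^ 2))).
    { apply (H4 ws (fun j => t (kap j)) (fun j => wm (kap j))).
      intro; apply Htp. apply Un_cv_sub; auto. apply Hdt. exact Hcw.
      intros eta Heta.
      pose proof (xconv_sub_fin _ _ _ Hq2 Hkap) as Hq3. simpl in Hq3.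
      pose proof (vconv_sub _ _ _ _ Hw2 Hkap) as Hw3.
      assert (Hb : Un_cv (fun j => 2 * (- m / 2 * norm (w2 (kap j)) ^ 2 + lam / 2 * norm (vsub (w2 (kap j)) w0) ^ 2)
                                  - 2 * (- m / 2 * norm (wm (kap j)) ^ 2 + lam / 2 * norm (vsub (wm (kap j)) w0) ^ 2))
                 (2 * (- m / 2 * norm w0 ^ 2 + lam / 2 * norm (vsub w0 w0) ^ 2)
                  - 2 * (- m / 2 * norm ws ^ 2 + lam / 2 * norm (vsub ws w0) ^ 2))).
      { apply CV_minus; apply CV_mult; try apply Un_cv_const; apply CV_plus; apply CV_mult; try apply Un_cv_const;
        apply norm2_cv; auto; apply vconv_sub_v; auto; apply vconv_const. }
      replace (vsub w0 w0) with (@vzero n) in Hb by vext. rewrite norm_zero in Hb.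
      destruct (Hq3 (eta/2)) as [N1 HN1]; [lra|]. destruct (Hb (eta/2)) as [N2 HN2]; [lra|].
      destruct (Hw3 1) as [N3 HN3]; [lra|].
      exists (max N1 (max N2 N3)). intros j Hj.
      destruct (HN1 j ltac:(lia)) as [pp [Epp Hpp]]. specialize (HN2 j ltac:(lia)). specialize (HN3 j ltac:(lia)).
      unfold R_dist in HN2. apply Rabs_def2 in HN2. apply Rabs_def2 in Hpp.
      set (k := kap j) in *. specialize (Htp k).
      assert (Ef := Q_inv _ _ pp Htp Epp).
      assert (Hball : norm (vsub (vadd xb (vscal (t k) (w2 k))) xb) <= t k * R).
      { rewrite vsub_add_scal, norm_scal, Rabs_right by lra. apply Rmult_le_compat_l. lra.
        apply norm_le_R in HN3. unfold R. lra. }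
      destruct (Hxm k) as [_ Hmk]. specialize (Hmk _ Hball).
      rewrite Ef, Ec, <- (Exm k), Ec in Hmk.
      destruct (f (vadd xb (vscal (t k) (wm k)))) as [|ym|] eqn:Efm; cbn [xaddr xle] in Hmk; [exfalso; eapply Hnm; eauto| |tauto].
      rewrite (Q_fin _ _ ym Htp Efm). simpl. apply div_le. nra.
      set (A2 := - m / 2 * norm (w2 k) ^ 2 + lam / 2 * norm (vsub (w2 k) w0) ^ 2) in *.
      set (Am := - m / 2 * norm (wm k) ^ 2 + lam / 2 * norm (vsub (wm k) w0) ^ 2) in *.
      assert (Hlim : pp + (2 * A2 - 2 * Am) < m * norm ws ^ 2 - lam * norm (vsub ws w0) ^ 2 + eta).
      { assert (m * norm w0 ^ 2 + (2 * (- m / 2 * norm w0 ^ 2 + lam / 2 * 0 ^ 2) -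
          2 * (- m / 2 * norm ws ^ 2 + lam / 2 * norm (vsub ws w0) ^ 2)) = m * norm ws ^ 2 - lam * norm (vsub ws w0) ^ 2) by field.
        lra. }
      assert (ym - fxb <= t k ^ 2 / 2 * (pp + (2 * A2 - 2 * Am))).
      { replace (t k ^ 2 / 2 * (pp + (2 * A2 - 2 * Am))) with (t k ^ 2 / 2 * pp + t k ^ 2 * A2 - t k ^ 2 * Am) by field. lra. }
      assert (t k ^ 2 / 2 > 0) by nra.
      apply Rle_trans with (t k ^ 2 / 2 * (pp + (2 * A2 - 2 * Am))); auto.
      rewrite Rmult_comm. apply Rmult_le_compat_r; lra. }
    specialize (Hmin ws). pose proof (xle_trans _ _ _ Hmin HH). simpl in H0.
    pose proof (norm_ge0 _ (vsub ws w0)). assert (lam * norm (vsub ws w0) ^ 2 <= 0) by lra.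
    assert (norm (vsub ws w0) ^ 2 > 0) by nra. nra. }
  destruct (Hconv (1/2)) as [K HK]; [lra|].
  set (zk := fun k => vsub (vscal m (wm k)) (vscal lam (vsub (wm k) w0))).
  apply (gder_ev n f xb w0 (vscal m w0) t wm zk K Hdt Hconv).
  { assert (E: vsub (vscal m w0) (vscal lam (vsub w0 w0)) = vscal m w0) by vext.
    pose proof (vconv_sub_v _ _ _ _ _ (vconv_scal_c _ wm w0 m Hconv)
      (vconv_scal_c _ _ _ lam (vconv_sub_v _ wm (fun _ => w0) w0 w0 Hconv (vconv_const _ w0)))) as HH.
    rewrite E in HH. exact HH. }
  intros k Hk. specialize (HK k Hk). specialize (Htp k).
  assert (Ev : vscal (t k) (zk k) = vsub (vscal m (vsub (xm k) xb)) (vscal lam (vsub (xm k) (p k)))).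
  { rewrite <- (Exm k). unfold zk, p. vext. }
  assert (Ea : vsub (xm k) xb = vscal (t k) (wm k)) by (rewrite <- (Exm k); apply vsub_add_scal).
  rewrite (Exm k).
  destruct (Hxm k) as [Hb Hmk].
  assert (Hxb : norm (vsub xb xb) <= t k * R) by (replace (vsub xb xb) with (@vzero n) by vext; rewrite norm_zero; nra).
  pose proof (Hmk xb Hxb) as Hm0. rewrite Hfxb in Hm0.
  destruct (f (xm k)) as [|ym|] eqn:Efm; cbn [xaddr xle] in Hm0; [exfalso; eapply Hnm; eauto| |tauto].
  apply (reg_subdiff n f (xm k) ym _ ((lam - m)/2) (t k / 2)); auto; [lra|lra|].
  intros y Hy.
  assert (Hyb : norm (vsub y xb) <= t k * R).
  { pose proof (norm_sub_tri _ y (xm k) xb). rewrite Ea, norm_scal, Rabs_right in H0 by lra.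
    apply norm_le_R in HK. unfold R. nra. }
  specialize (Hmk y Hyb).
  destruct (f y) as [|fy|]; cbn [xaddr xle] in Hmk |- *; [tauto| |auto].
  set (a := vsub (xm k) xb) in *. set (b := vsub (xm k) (p k)) in *. set (h := vsub y (xm k)).
  assert (Ecy : c k y = c k (xm k) - m * dot a h + lam * dot b h + (lam - m) / 2 * norm h ^ 2).
  { unfold c. fold a b. replace (vsub y xb) with (vadd a h) by (unfold a, h; vext).
    replace (vsub y (p k)) with (vadd b h) by (unfold b, h; vext). rewrite !norm_add_sq. field. }
  rewrite Ev, dot_sub_l, !dot_scal_l. lra.
Qed.

Lemma L_smm_H kap : (exists d, d > 0 /\ forall x, norm (vsub x xb) < d -> xle (Fin (fxb + kap / 2 * norm (vsub x xb) ^ 2)) (f x)) ->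
  forall w, xle (Fin (kap * norm w ^ 2)) (H w).
Proof.
  intros [d [Hd Hm]] w.
  apply (HLB w (fun w' => kap * norm w' ^ 2)).
  - pose proof (norm_ge0 _ w).
    exists (Rmin 1 (d / (norm w + 2))). split. apply Rmin_pos. lra. apply Rdiv_lt_0_compat; lra.
    intros tau w' Ht Hw'. assert (Rmin 1 (d / (norm w + 2)) <= 1) by apply Rmin_l.
    assert (Rmin 1 (d / (norm w + 2)) <= d / (norm w + 2)) by apply Rmin_r.
    apply norm_le_R in Hw'.
    assert (tau * norm w' < d).
    { apply Rle_lt_trans with (d / (norm w + 2) * (norm w + 1)). pose proof (norm_ge0 _ w').
      apply Rmult_le_compat; lra. apply Rlt_le_trans with (d / (norm w + 2) * (norm w + 2)).
      apply Rmult_lt_compat_l. apply Rdiv_lt_0_compat; lra. lra. right. field. lra. }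
    apply Q_ge; [lra|]. specialize (Hm (vadd xb (vscal tau w'))).
    rewrite vsub_add_scal, norm_scal, Rabs_right in Hm by lra.
    eapply xle_trans; [|apply Hm; lra]. simpl. apply Req_le. field.
  - intros eta He. destruct (sq_cont _ w kap eta He) as [d' [Hd' Hc]]. exists d'. split; auto.
    intros w' Hw'. specialize (Hc w' Hw'). apply Rabs_def2 in Hc. lra.
Qed.

Lemma L_iv kap : (exists d, d > 0 /\ forall x, norm (vsub x xb) < d -> xle (Fin (fxb + kap / 2 * norm (vsub x xb) ^ 2)) (f x)) ->
  forall w z, gder f xb vzero w z -> dot z w >= kap * norm w ^ 2.
Proof.
  intros Hk w z Hg. destruct (B1 w z Hg) as [a [Ea Ha]]. pose proof (L_smm_H kap Hk w) as HH.
  rewrite Ea in HH. simpl in HH. lra.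
Qed.

Lemma smm_get kap : strong_min_mod f xb kap ->
  exists d, d > 0 /\ forall x, norm (vsub x xb) < d -> xle (Fin (fxb + kap / 2 * norm (vsub x xb) ^ 2)) (f x).
Proof. intros [fx [E H']]. rewrite Hfxb in E. injection E as <-. exact H'. Qed.

Lemma smm_make kap : (exists d, d > 0 /\ forall x, norm (vsub x xb) < d -> xle (Fin (fxb + kap / 2 * norm (vsub x xb) ^ 2)) (f x)) ->
  strong_min_mod f xb kap.
Proof. intro H'. exists fxb. split; auto. Qed.

Lemma not_smm_seq kap : ~ strong_min_mod f xb kap ->
  forall k, exists x, norm (vsub x xb) < tk k /\ ~ xle (Fin (fxb + kap / 2 * norm (vsub x xb) ^ 2)) (f x).
Proof.
  intros Hn k. apply NNPP. intro Hn2. apply Hn, smm_make. exists (tk k). split. apply tk_pos.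
  intros x Hx. apply NNPP. intro Hn3. apply Hn2. eauto.
Qed.

Lemma dot_unit (w : vec n) m : norm w = 1 -> dot (vscal m w) w = m.
Proof. intro Hw. rewrite dot_scal_l, <- norm_sq', Hw. ring. Qed.

Lemma vec_ne0 (w : vec n) : norm w = 1 -> w <> vzero.
Proof. intros Hw E. rewrite E, norm_zero in Hw. lra. Qed.

Lemma iii_i : (forall w z, gder_dom f xb vzero w -> w <> vzero -> gder f xb vzero w z -> dot z w > 0) ->
  strong_local_min f xb.
Proof.
  intro H3. apply NNPP. intro Hn.
  destruct (K1 tk 0 tk_cv) as [w1 [Hw1 Hle]].
  { intro k. apply not_smm_seq. intro Hs. apply Hn. exists (tk k). split; auto. apply tk_pos. }
  destruct (K2 w1 0 Hw1 Hle) as [w0 [m [Hw0 [Hm [Ew0 Hall]]]]].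
  assert (Hg : gder f xb vzero w0 (vscal m w0)).
  { apply K3. rewrite Hw0, Ew0. f_equal. ring. auto. }
  specialize (H3 w0 (vscal m w0) ltac:(exists (vscal m w0); auto) (vec_ne0 _ Hw0) Hg).
  rewrite dot_unit in H3; auto. lra.
Qed.

Lemma i_iv : strong_local_min f xb -> exists c, c > 0 /\ forall w z, gder_dom f xb vzero w ->
               gder f xb vzero w z -> dot z w >= c * (norm w) ^ 2.
Proof. intros [kap [Hk Hs]]. exists kap. split; auto. intros w z _. apply L_iv, smm_get; auto. Qed.

Lemma iv_iii : (exists c, c > 0 /\ forall w z, gder_dom f xb vzero w ->
               gder f xb vzero w z -> dot z w >= c * (norm w) ^ 2) ->
  (forall w z, gder_dom f xb vzero w -> w <> vzero -> gder f xb vzero w z -> dot z w > 0).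
Proof. intros [c [Hc H']] w z Hd Hw Hg. specialize (H' w z Hd Hg). pose proof (norm_pos_neq _ w Hw).
  assert (c * norm w ^ 2 > 0) by (apply Rmult_lt_0_compat; auto; apply pow_lt; auto). lra. Qed.

Lemma i_ii : strong_local_min f xb -> local_min f xb /\ strong_metric_subreg (subdiff f) xb vzero.
Proof.
  intro Hi. pose proof (i_iv Hi) as [c [Hc Hiv]].
  destruct Hi as [kap [Hk Hs]]. apply smm_get in Hs as [d0 [Hd0 Hs]].
  split.
  { exists d0. split; auto. intros x Hx. rewrite Hfxb. eapply xle_trans; [|apply Hs; auto]. simpl.
    pose proof (pow2_ge_0 (norm (vsub x xb))). nra. }
  assert (Key : exists kk d, kk > 0 /\ d > 0 /\ forall x, norm (vsub x xb) < d -> forall v, subdiff f x v ->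
                  norm (vsub x xb) <= kk * norm v).
  { apply NNPP. intro Hn.
    assert (Hseq : forall k, exists x, exists v, norm (vsub x xb) < tk k /\ subdiff f x v /\ norm (vsub x xb) > INR (S k) * norm v).
    { intro k. apply NNPP. intro Hn2. apply Hn. exists (INR (S k)), (tk k). split. apply lt_0_INR; lia. split. apply tk_pos.
      intros x Hx v Hv. apply Rnot_lt_le. intro Hlt. apply Hn2. exists x, v. auto. }
    destruct (choice _ Hseq) as [xs Hxs]. destruct (choice _ Hxs) as [vs Hvs].
    set (d := fun k => norm (vsub (xs k) xb)).
    assert (Hd : forall k, d k > 0).
    { intro k. destruct (Hvs k) as [_ [_ H3]]. pose proof (norm_ge0 _ (vs k)). pose proof (pos_INR (S k)).
      unfold d. nra. }
    set (u := fun k => vscal (/ d k) (vsub (xs k) xb)).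
    assert (Hu : forall k, norm (u k) = 1) by (intro k; apply unit_scal, Hd).
    set (zz := fun k => vscal (/ d k) (vs k)).
    assert (Hz : forall k, norm (zz k) < tk k).
    { intro k. unfold zz. rewrite norm_scal, Rabs_right. destruct (Hvs k) as [H1' [_ H3]].
      change (norm (vsub (xs k) xb)) with (d k) in H3.
      specialize (Hd k). unfold tk. assert (HI : INR (S k) > 0) by (apply lt_0_INR; lia).
      set (D := d k) in *. set (I := INR (S k)) in *. set (nv := norm (vs k)) in *.
      apply (Rmult_lt_reg_l (D * I)). nra.
      replace (D * I * (/ D * nv)) with (I * nv) by (field; lra).
      replace (D * I * / I) with D by (field; lra). lra.
      apply Rle_ge, Rlt_le, Rinv_0_lt_compat, Hd. }
    destruct (BWn n u 1) as [phi [w [Hphi Hcv]]]. intro k; rewrite Hu; lra.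
    assert (Hw : norm w = 1).
    { apply (UL_sequence (fun j => norm (u (phi j)))). apply vconv_norm; auto.
      assert ((fun j => norm (u (phi j))) = fun _ => 1) as -> by (apply functional_extensionality; intro; apply Hu).
      apply Un_cv_const. }
    assert (Hg : gder f xb vzero w vzero).
    { apply gder_iff. exists (fun j => d (phi j)), (fun j => u (phi j)), (fun j => zz (phi j)).
      split; [split|split; [auto|split]].
      - intro; apply Hd.
      - apply Un_cv_sub; auto. intros e He. destruct (tk_cv e He) as [N HN]. exists N. intros k Hk2.
        specialize (HN k Hk2). unfold R_dist in HN |- *. rewrite Rminus_0_r in HN |- *.
        rewrite (Rabs_right (tk k)) in HN by (apply Rle_ge, Rlt_le, tk_pos).
        rewrite (Rabs_right (d k)) by (apply Rle_ge, Rlt_le, Hd).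
        destruct (Hvs k) as [Hl _]. unfold d. lra.
      - intros e He. destruct (tk_cv e He) as [N HN]. exists N. intros j Hj.
        specialize (HN (phi j)). rewrite norm_sub0. eapply Rlt_trans. apply Hz.
        unfold R_dist in HN. rewrite Rminus_0_r, Rabs_right in HN by (apply Rle_ge, Rlt_le, tk_pos).
        apply HN. pose proof (subseq_ge _ Hphi j). lia.
      - intro j. set (k := phi j).
        replace (vadd xb (vscal (d k) (u k))) with (xs k).
        replace (vscal (d k) (zz k)) with (vs k). apply Hvs.
        apply functional_extensionality; intro i. unfold zz, vscal. field. pose proof (Hd k); lra.
        apply functional_extensionality; intro i. unfold u, vadd, vscal, vsub. field. pose proof (Hd k); lra. }
    specialize (Hiv w vzero ltac:(exists vzero; auto) Hg). rewrite dot_zero_l, Hw in Hiv. lra. }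
  destruct Key as [kk [dd [Hkk [Hdd Hkey]]]].
  split; [|split].
  - exists kk, dd. split; auto. split; auto. intros x Hx d1 d2 Hd1 Hd2.
    assert (E1 : xle d1 (Fin (norm (vsub x xb)))). { apply (proj1 Hd1). exists xb. split; auto. }
    assert (E2 : xle (Fin (norm (vsub x xb) / kk)) d2).
    { apply (proj2 Hd2). intros s [v [Hv ->]]. simpl. rewrite norm_0sub. specialize (Hkey x Hx v Hv).
      apply div_le; auto. lra. }
    destruct d2 as [|r2|]; simpl in E2 |- *; try tauto.
    + eapply xle_trans; [exact E1|]. simpl.
      assert (norm (vsub x xb) / kk * kk <= r2 * kk) by (apply Rmult_le_compat_r; lra).
      replace (norm (vsub x xb) / kk * kk) with (norm (vsub x xb)) in H0 by (field; lra). lra.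
    + apply xle_PInf.
  - exact H0sub.
  - exists dd. split; auto. intros x Hx Hv. specialize (Hkey x Hx vzero Hv). rewrite norm_zero in Hkey.
    apply vsub_eq0, norm_eq0. pose proof (norm_ge0 _ (vsub x xb)). lra.
Qed.

Lemma ii_iii : local_min f xb /\ strong_metric_subreg (subdiff f) xb vzero ->
  forall w z, gder_dom f xb vzero w -> w <> vzero -> gder f xb vzero w z -> dot z w > 0.
Proof.
  intros [Hlm [[kk [dd [Hkk [Hdd HS]]]] [_ [d' [Hd' Hiso]]]]] w z _ Hw Hg.
  apply Rnot_le_lt. intro Hle.
  destruct (B1 w z Hg) as [a [Ea Ha]].
  assert (H0all : forall w', xle (Fin (0 * norm w' ^ 2)) (H w')).
  { apply L_smm_H. destruct Hlm as [d [Hd Hl]]. exists d. split; auto. intros x Hx. specialize (Hl x Hx).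
    rewrite Hfxb in Hl. eapply xle_trans; [|exact Hl]. simpl. lra. }
  pose proof (H0all w) as Hw0. rewrite Ea in Hw0. simpl in Hw0.
  assert (Hg0 : gder f xb vzero w (vscal 0 w)). { apply K3; auto. rewrite Ea. f_equal. lra. }
  replace (vscal 0 w) with (@vzero n) in Hg0 by vext.
  apply gder_iff in Hg0. destruct Hg0 as [t [wk [zk [[Ht1 Ht2] [Hwk [Hzk Hs]]]]]].
  pose proof (norm_pos_neq _ w Hw) as Hnw.
  destruct (vconv_norm _ _ _ Hwk (norm w / 2)) as [N1 HN1]; [lra|].
  destruct (Hzk (norm w / (4 * kk))) as [N2 HN2]. apply Rdiv_lt_0_compat; lra.
  destruct (xk_conv t wk w Ht2 Hwk (Rmin dd (d'/2))) as [N3 HN3]. apply Rmin_pos; lra.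
  set (k := max N1 (max N2 N3)).
  specialize (HN1 k ltac:(lia)). specialize (HN2 k ltac:(lia)). specialize (HN3 k ltac:(lia)).
  unfold R_dist in HN1. apply Rabs_def2 in HN1. rewrite norm_sub0 in HN2.
  assert (Rmin dd (d'/2) <= dd) by apply Rmin_l. assert (Rmin dd (d'/2) <= d'/2) by apply Rmin_r.
  set (xk := vadd xb (vscal (t k) (wk k))) in *.
  assert (Exk : norm (vsub xk xb) = t k * norm (wk k)).
  { unfold xk. rewrite vsub_add_scal, norm_scal, Rabs_right; auto. apply Rle_ge, Rlt_le, Ht1. }
  destruct (inf_exists (fun s => exists a, subdiff f a vzero /\ s = Fin (norm (vsub xk a)))) as [d1 Hd1].
  destruct (inf_exists (fun s => exists a, subdiff f xk a /\ s = Fin (norm (vsub vzero a)))) as [d2 Hd2].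
  specialize (HS xk ltac:(lra) d1 d2 Hd1 Hd2).
  assert (E1 : xle (Fin (norm (vsub xk xb))) d1).
  { apply (proj2 Hd1). intros s [a' [Ha' ->]]. simpl.
    destruct (Rlt_le_dec (norm (vsub a' xb)) d') as [Hlt|Hge].
    - rewrite (Hiso a' Hlt Ha'). lra.
    - pose proof (norm_sub_tri _ a' xk xb) as T. rewrite (norm_sub_sym _ a' xk) in T. lra. }
  assert (E2 : xle d2 (Fin (norm (vsub vzero (vscal (t k) (zk k)))))).
  { apply (proj1 Hd2). exists (vscal (t k) (zk k)). split; [apply Hs|reflexivity]. }
  rewrite norm_0sub, norm_scal, Rabs_right in E2 by (apply Rle_ge, Rlt_le, Ht1).
  assert (E3 : xle (xscal kk d2) (Fin (kk * (t k * norm (zk k))))).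
  { destruct d2; simpl in E2 |- *; try tauto. apply Rmult_le_compat_l; lra. }
  pose proof (xle_trans _ _ _ (xle_trans _ _ _ E1 HS) E3) as Hf. simpl in Hf. rewrite Exk in Hf.
  specialize (Ht1 k).
  assert (norm (wk k) <= kk * norm (zk k)).
  { apply (Rmult_le_reg_l (t k)); auto. lra. }
  assert (kk * norm (zk k) < norm w / 4).
  { apply Rlt_le_trans with (kk * (norm w / (4 * kk))). apply Rmult_lt_compat_l; auto. right. field. lra. }
  lra.
Qed.

Lemma qg_part : strong_local_min f xb -> forall q r', is_QG f xb q ->
  is_inf (fun s => exists w z, gder f xb vzero w z /\ s = ratio z w) r' -> q = r'.
Proof.
  intros [k0 [Hk0 Hs0]] q r' [Hq1 Hq2] [Hr1 Hr2].
  assert (A : xle q r').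
  { apply Hq2. intros s [kap [Hkap [Hsm ->]]]. apply Hr2. intros s [w [z [Hg ->]]]. unfold ratio.
    destruct (Req_EM_T (norm w) 0). simpl; auto. simpl.
    pose proof (L_iv kap (smm_get kap Hsm) w z Hg). apply le_div.
    pose proof (norm_ge0 _ w). assert (norm w > 0) by lra. nra. nra. }
  assert (B : xle (Fin k0) q). { apply Hq1. exists k0. auto. }
  apply xle_antisym; auto.
  destruct q as [| Qv |]; simpl in B; try tauto.
  2: apply xle_PInf.
  apply NNPP. intro Hn.
  assert (exists k1 k2, Qv < k1 < k2 /\ xle (Fin k2) r') as [k1 [k2 [Hk12 Hk2]]].
  { destruct r' as [|R0|]; simpl in Hn.
    - exfalso; apply Hn; simpl; auto.
    - exists (Qv + (R0 - Qv)/3), (Qv + 2*(R0-Qv)/3). split. lra. simpl. lra.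
    - exists (Qv+1), (Qv+2). split. lra. simpl. auto. }
  assert (Hns : ~ strong_min_mod f xb k1).
  { intro Hsm. assert (xle (Fin k1) (Fin Qv)) by (apply Hq1; exists k1; repeat split; auto; lra).
    simpl in H0. lra. }
  destruct (K1 (fun _ => k1) k1 (Un_cv_const k1) (not_smm_seq k1 Hns)) as [w1 [Hw1 Hle]].
  destruct (K2 w1 k1 Hw1 Hle) as [w0 [m [Hw0 [Hm [Ew0 Hall]]]]].
  assert (Hg : gder f xb vzero w0 (vscal m w0)).
  { apply K3. rewrite Hw0, Ew0. f_equal. ring. auto. }
  assert (Hrr : xle r' (ratio (vscal m w0) w0)) by (apply Hr1; exists w0, (vscal m w0); auto).
  unfold ratio in Hrr. destruct (Req_EM_T (norm w0) 0). lra.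
  rewrite dot_unit, Hw0 in Hrr; auto.
  pose proof (xle_trans _ _ _ Hk2 Hrr) as Hfin. simpl in Hfin.
  replace (m / 1 ^ 2) with m in Hfin by field. lra.
Qed.

Lemma core :
  let i := strong_local_min f xb in
  let ii := local_min f xb /\ strong_metric_subreg (subdiff f) xb vzero in
  let iii := forall w z, gder_dom f xb vzero w -> w <> vzero ->
               gder f xb vzero w z -> dot z w > 0 in
  let iv := exists c, c > 0 /\ forall w z, gder_dom f xb vzero w ->
               gder f xb vzero w z -> dot z w >= c * (norm w) ^ 2 in
  ((i <-> ii) /\ (i <-> iii) /\ (i <-> iv)) /\
  ((i \/ ii \/ iii \/ iv) ->
     forall q r, is_QG f xb q ->
       is_inf (fun s => exists w z, gder f xb vzero w z /\ s = ratio z w) r ->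
       q = r).
Proof.
  intros i ii iii iv.
  assert (Hi_iii : i -> iii) by (intro H'; exact (iv_iii (i_iv H'))).
  assert (Hi : (i \/ ii \/ iii \/ iv) -> i).
  { intros [H'|[H'|[H'|H']]]. exact H'. exact (iii_i (ii_iii H')). exact (iii_i H'). exact (iii_i (iv_iii H')). }
  split.
  - split; [|split].
    + split; [exact i_ii|]. intro; apply Hi; auto.

    + split; [exact Hi_iii|]. intro; apply Hi; auto.
    + split; [exact i_iv|]. intro; apply Hi; auto.
  - intros Hor q r'. apply qg_part. apply Hi; auto.
Qed.

End Setting.


Theorem theorem3p8 (n : nat) (f : vec n -> xreal) (xb : vec n) :
  proper f -> lsc f -> dom f xb -> subdiff f xb vzero ->
  subdiff_continuous f xb vzero -> prox_regular f xb vzero ->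
  twice_epi_diff f xb vzero ->
  let i := strong_local_min f xb in
  let ii := local_min f xb /\ strong_metric_subreg (subdiff f) xb vzero in
  let iii := forall w z, gder_dom f xb vzero w -> w <> vzero ->
               gder f xb vzero w z -> dot z w > 0 in
  let iv := exists c, c > 0 /\ forall w z, gder_dom f xb vzero w ->
               gder f xb vzero w z -> dot z w >= c * (norm w) ^ 2 in
  ((i <-> ii) /\ (i <-> iii) /\ (i <-> iv)) /\
  ((i \/ ii \/ iii \/ iv) ->
     forall q r, is_QG f xb q ->
       is_inf (fun s => exists w z, gder f xb vzero w z /\ s = ratio z w) r ->
       q = r).
Proof.
  intros Hprop Hlsc Hdom Hsub0 Hsc Hprox Htw.
  destruct Hprox as [fxb [Hfxb [r [eps [Hr [Heps Hpr]]]]]].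
  destruct Hsc as [fx2 [Hf2 Hsc']]. rewrite Hfxb in Hf2. injection Hf2 as <-.
  destruct Htw as [fx3 [Hf3 Htw']]. rewrite Hfxb in Hf3. injection Hf3 as <-.
  exact (core n f xb fxb Hfxb (proj1 Hprop) Hlsc Hsub0 r eps Hr Heps Hpr Hsc' Htw').
Qed.
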